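(* Let $\theta\in M_{k,d}([0,\infty))$ with rows $\theta_1,\dots,\theta_k$, let $\beta\in(0,\infty)$ and $r\in(0,\infty)^k$. Call a finite positive measure $\nu$ on $\mathbb{S}^d$ subinvariant if \[ \prod_{j=1}^k\big(\operatorname{id}-e^{-\beta s_jr_j}R_{s_j\theta_j^T*}\big)(\nu)\ge0\quad\text{for all }s\in[0,\infty)^k. \] (a) For each finite positive measure $\mu$ on $\mathbb{S}^d$ there is a finite positive measure $\nu_\mu$ on $\mathbb{S}^d$ with \[ \int_{\mathbb{S}^d}f\,d\nu_\mu=\int_{[0,\infty)^k}e^{-\beta w^Tr}\int_{\mathbb{S}^d}f(x+\theta^Tw)\,d\mu(x)\,dw\quad(f\in C(\mathbb{S}^d)), \] $\nu_\mu$ has total mass $\|\mu\|\prod_{j=1}^k(\beta r_j)^{-1}$, and $\nu_\mu$ is subinvariant. (b) For each subinvariant $\nu$ there is a finite positive measure $\mu_\nu$ on $\mathbb{S}^d$ with \[ \int_{\mathbb{S}^d}f\,d\mu_\nu=\lim_{s_k\to0^+}\cdots\lim_{s_1\to0^+}\frac{1}{s_k\cdots s_1}\int_{\mathbb{S}^d}f\,d\Big(\prod_{j=1}^k\big(\operatorname{id}-e^{-\beta s_jr_j}R_{s_j\theta_j^T*}\big)(\nu)\Big)\quad(f\in C(\mathbb{S}^d)), \] where the iterated limits exist, and $\mu_\nu$ has total mass $\|\nu\|\prod_{j=1}^k(\beta r_j)$. (c) The map $\mu\mapsto\nu_\mu$ is an affine homeomorphism of the cone $M(\mathbb{S}^d)$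 of finite positive measures onto the set of subinvariant measures, with inverse $\nu\mapsto\mu_\nu$.
   Context: $\mathbb{S}^d=\mathbb{R}^d/\mathbb{Z}^d$; functions on $\mathbb{S}^d$ are viewed as $\mathbb{Z}^d$-periodic functions on $\mathbb{R}^d$. Vectors are columns and $A^T$ denotes transpose. For $y\in\mathbb{R}^d$, $R_y(x)=x+y$, and $R_{y*}$ is the pushforward on measures: $\int f\,dR_{y*}\mu=\int f\circ R_y\,d\mu$. A signed measure is ''$\ge0$'' if it is a positive measure. $\|\mu\|$ is total mass. Measures carry the weak* topology as functionals on $C(\mathbb{S}^d)$. *)

(* Defs.v *)
(* Finite positive measures on the torus
   S^d = R^d/Z^d are represented, via the Riesz representation theorem, as
   positive linear functionals on C(S^d) (Z^d-periodic continuous functions). *)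
From Stdlib Require Import Reals List.
Open Scope R_scope.

(* Points of R^d: only the coordinates 0..d-1 are relevant. *)
Definition vec := nat -> R.

Definition vadd (x y : vec) : vec := fun i => x i + y i.
Definition upd (x : vec) (n : nat) (t : R) : vec :=
  fun i => if Nat.eqb i n then t else x i.

Fixpoint sumR (n : nat) (g : nat -> R) : R :=
  match n with O => 0 | S m => sumR m g + g m end.
Fixpoint prodR (n : nat) (g : nat -> R) : R :=
  match n with O => 1 | S m => prodR m g * g m end.

Definition Cper (d : nat) (f : vec -> R) : Prop :=
  (forall x y : vec, (forall i, (i < d)%nat -> x i = y i) -> f x = f y) /\
  (forall (x : vec) (i : nat), (i < d)%nat -> f (upd x i (x i + 1)) = f x) /\
  (forall (x : vec) (eps : R), 0 < eps -> exists delta, 0 < delta /\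
     forall y : vec, (forall i, (i < d)%nat -> Rabs (y i - x i) < delta) ->
       Rabs (f y - f x) < eps).

Definition meas := (vec -> R) -> R.

Definition IsMeasure (d : nat) (m : meas) : Prop :=
  (forall f g, Cper d f -> Cper d g -> m (fun x => f x + g x) = m f + m g) /\
  (forall a f, Cper d f -> m (fun x => a * f x) = a * m f) /\
  (forall f, Cper d f -> (forall x, 0 <= f x) -> 0 <= m f).

Definition PosFun (d : nat) (m : meas) : Prop :=
  forall f, Cper d f -> (forall x, 0 <= f x) -> 0 <= m f.

Definition mass (m : meas) : R := m (fun _ => 1).

Definition pushR (y : vec) (m : meas) : meas := fun f => m (fun x => f (vadd x y)).

(* theta : k x d matrix, entry theta j i (row j, column i);
   s_j theta_j^T is the vector (s_j theta j i)_i *)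
Definition rowvec (theta : nat -> nat -> R) (j : nat) (t : R) : vec :=
  fun i => t * theta j i.

Definition thetaT (k : nat) (theta : nat -> nat -> R) (w : vec) : vec :=
  fun i => sumR k (fun j => theta j i * w j).

Definition Dop (theta : nat -> nat -> R) (beta : R) (r : nat -> R)
  (j : nat) (s : vec) (m : meas) : meas :=
  fun f => m f - exp (- (beta * s j * r j)) * pushR (rowvec theta j (s j)) m f.

Definition Pop (k : nat) (theta : nat -> nat -> R) (beta : R) (r : nat -> R)
  (s : vec) (nu : meas) : meas :=
  fold_right (fun j m => Dop theta beta r j s m) nu (seq 0 k).

Definition Subinvariant (d k : nat) (theta : nat -> nat -> R) (beta : R)
  (r : nat -> R) (nu : meas) : Prop :=
  IsMeasure d nu /\
  forall s : vec, (forall j, (j < k)%nat -> 0 <= s j) ->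
    PosFun d (Pop k theta beta r s nu).

Definition ImproperInt (h : R -> R) (L : R) : Prop :=
  (forall T, 0 <= T -> exists _ : Riemann_integrable h 0 T, True) /\
  (forall eps, 0 < eps -> exists M, forall T (pr : Riemann_integrable h 0 T),
      M <= T -> Rabs (RiemannInt pr - L) < eps).

(* iterated integral over [0,oo)^(coordinates in l), head coordinate innermost *)
Fixpoint IterInt (l : list nat) (g : vec -> R) (L : R) : Prop :=
  match l with
  | nil => forall w, g w = L
  | j :: l' => exists G : vec -> R,
      (forall w, ImproperInt (fun t => g (upd w j t)) (G w)) /\ IterInt l' G L
  end.

Definition LimRight0 (h : R -> R) (L : R) : Prop :=
  forall eps, 0 < eps -> exists delta, 0 < delta /\
    forall t, 0 < t < delta -> Rabs (h t - L) < eps.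

(* iterated limits s_j -> 0+ over the coordinates in l, head innermost;
   outer (remaining) variables are kept strictly positive *)
Fixpoint IterLim (l : list nat) (F : vec -> R) (L : R) : Prop :=
  match l with
  | nil => forall s, F s = L
  | j :: l' => exists G : vec -> R,
      (forall s, (forall i, In i l' -> 0 < s i) ->
         LimRight0 (fun t => F (upd s j t)) (G s)) /\ IterLim l' G L
  end.

Definition WeakStarCont (d : nat) (A : meas -> Prop) (Phi : meas -> meas) : Prop :=
  forall m0, A m0 -> forall f, Cper d f -> forall eps, 0 < eps ->
    exists (gs : list (vec -> R)) (delta : R), 0 < delta /\
      (forall g, In g gs -> Cper d g) /\
      forall m, A m -> (forall g, In g gs -> Rabs (m g - m0 g) < delta) ->
        Rabs (Phi m f - Phi m0 f) < eps.

Definition MeasEq (d : nat) (m1 m2 : meas) : Prop :=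
  forall f, Cper d f -> m1 f = m2 f.

(* Main.v *)
Require Import Defs.
From Stdlib Require Import Reals List.
Open Scope R_scope.
From Stdlib Require Import Lra Lia FunctionalExtensionality ClassicalEpsilon Classical ZArith.

Lemma my_choice {A B : Type} (P : A -> B -> Prop) :
  (forall a, exists b, P a b) -> exists g : A -> B, forall a, P a (g a).
Proof.
  intros H. exists (fun a => proj1_sig (constructive_indefinite_description _ (H a))).
  intros a. exact (proj2_sig (constructive_indefinite_description _ (H a))).
Qed.

Lemma Rabs_le_inv a b : Rabs a <= b -> -b <= a <= b.
Proof. intros H. pose proof (Rle_abs a). pose proof (Rle_abs (-a)). rewrite Rabs_Ropp in H1. lra. Qed.

Definition tr (v : vec) (f : vec -> R) : vec -> R := fun x => f (vadd x v).

Lemma vadd_assoc x a b : vadd (vadd x a) b = vadd x (vadd a b).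
Proof. apply functional_extensionality; intro i; unfold vadd; ring. Qed.
Lemma vadd_comm a b : vadd a b = vadd b a.
Proof. apply functional_extensionality; intro i; unfold vadd; ring. Qed.

Lemma tr_tr a b f : tr a (tr b f) = tr (vadd a b) f.
Proof. unfold tr. apply functional_extensionality; intro x. now rewrite vadd_assoc. Qed.
Lemma tr_comm a b f : tr a (tr b f) = tr b (tr a f).
Proof. rewrite !tr_tr, vadd_comm. reflexivity. Qed.

Lemma rowvec0 theta j f : tr (rowvec theta j 0) f = f.
Proof.
  unfold tr. apply functional_extensionality; intro x. f_equal.
  apply functional_extensionality; intro i; unfold vadd, rowvec; ring.
Qed.
Lemma rowvec_add theta j a b : vadd (rowvec theta j a) (rowvec theta j b) = rowvec theta j (a + b).
Proof. apply functional_extensionality; intro i; unfold vadd, rowvec; ring. Qed.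

Lemma upd_same x i a b : upd (upd x i a) i b = upd x i b.
Proof. apply functional_extensionality; intro n; unfold upd. destruct (Nat.eqb n i); auto. Qed.
Lemma upd_eq x i a : upd x i a i = a.
Proof. unfold upd. now rewrite Nat.eqb_refl. Qed.
Lemma upd_neq x i a n : n <> i -> upd x i a n = x n.
Proof. intro H. unfold upd. destruct (Nat.eqb_spec n i); auto. contradiction. Qed.

Lemma vadd_upd x v i : vadd (upd x i (x i + 1)) v = upd (vadd x v) i (vadd x v i + 1).
Proof.
  apply functional_extensionality; intro n; unfold vadd, upd.
  destruct (Nat.eqb_spec n i); subst; ring.
Qed.

Section CperSec.
Variable d : nat.

Lemma Cper_ext f g : (forall x, f x = g x) -> Cper d f -> Cper d g.
Proof.
  intros H Hf. replace g with f; auto. now apply functional_extensionality.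
Qed.

Lemma Cper_tr v f : Cper d f -> Cper d (tr v f).
Proof.
  intros [H1 [H2 H3]]. unfold tr. split; [|split].
  - intros x y Hxy. apply H1. intros i Hi. unfold vadd. now rewrite Hxy.
  - intros x i Hi. rewrite vadd_upd. now apply H2.
  - intros x eps He. destruct (H3 (vadd x v) eps He) as [dl [Hd Hdl]].
    exists dl; split; auto. intros y Hy. apply Hdl. intros i Hi.
    unfold vadd. replace (y i + v i - (x i + v i)) with (y i - x i) by ring. auto.
Qed.

Lemma Cper_const c : Cper d (fun _ => c).
Proof.
  split; [|split]; auto.
  intros x eps He; exists 1; split; [lra|]. intros; rewrite Rminus_diag, Rabs_R0; auto.
Qed.

Lemma Cper_lin a b f g : Cper d f -> Cper d g -> Cper d (fun x => a * f x + b * g x).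
Proof.
  intros [F1 [F2 F3]] [G1 [G2 G3]]. split; [|split].
  - intros x y H. now rewrite (F1 x y H), (G1 x y H).
  - intros x i Hi. now rewrite F2, G2.
  - intros x eps He.
    assert (Hc : 0 < eps / (2 * (Rabs a + Rabs b + 1))).
    { apply Rdiv_lt_0_compat; auto. pose proof (Rabs_pos a); pose proof (Rabs_pos b); lra. }
    destruct (F3 x _ Hc) as [d1 [Hd1 P1]]. destruct (G3 x _ Hc) as [d2 [Hd2 P2]].
    exists (Rmin d1 d2); split. { now apply Rmin_pos. }
    intros y Hy.
    assert (A1 : Rabs (f y - f x) < eps / (2 * (Rabs a + Rabs b + 1))).
    { apply P1. intros i Hi. specialize (Hy i Hi). pose proof (Rmin_l d1 d2). lra. }
    assert (A2 : Rabs (g y - g x) < eps / (2 * (Rabs a + Rabs b + 1))).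
    { apply P2. intros i Hi. specialize (Hy i Hi). pose proof (Rmin_r d1 d2). lra. }
    replace (a * f y + b * g y - (a * f x + b * g x)) with (a * (f y - f x) + b * (g y - g x)) by ring.
    eapply Rle_lt_trans. apply Rabs_triang. rewrite !Rabs_mult.
    set (e := eps / (2 * (Rabs a + Rabs b + 1))) in *.
    assert (e * (2 * (Rabs a + Rabs b + 1)) = eps).
    { unfold e. field. pose proof (Rabs_pos a); pose proof (Rabs_pos b); lra. }
    pose proof (Rabs_pos a); pose proof (Rabs_pos b).
    pose proof (Rabs_pos (f y - f x)); pose proof (Rabs_pos (g y - g x)).
    assert (Rabs a * Rabs (f y - f x) <= Rabs a * e) by (apply Rmult_le_compat_l; lra).
    assert (Rabs b * Rabs (g y - g x) <= Rabs b * e) by (apply Rmult_le_compat_l; lra).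
    nra.
Qed.

Lemma Cper_plus f g : Cper d f -> Cper d g -> Cper d (fun x => f x + g x).
Proof. intros. eapply Cper_ext; [|apply (Cper_lin 1 1 f g); auto]. intros; simpl; ring. Qed.
Lemma Cper_scal a f : Cper d f -> Cper d (fun x => a * f x).
Proof. intros. eapply Cper_ext; [|apply (Cper_lin a 0 f f); auto]. intros; simpl; ring. Qed.
Lemma Cper_minus f g : Cper d f -> Cper d g -> Cper d (fun x => f x - g x).
Proof. intros. eapply Cper_ext; [|apply (Cper_lin 1 (-1) f g); auto]. intros; simpl; ring. Qed.

Lemma Cper_shift1 f x i (n : nat) : Cper d f -> (i < d)%nat -> f (upd x i (x i + INR n)) = f x.
Proof.
  intros Hf Hi. induction n.
  - simpl. replace (upd x i (x i + 0)) with x; auto.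
    apply functional_extensionality; intro m; unfold upd. destruct (Nat.eqb_spec m i); subst; ring.
  - destruct Hf as [_ [H2 _]].
    rewrite S_INR. replace (upd x i (x i + (INR n + 1))) with
      (upd (upd x i (x i + INR n)) i (upd x i (x i + INR n) i + 1)).
    + rewrite H2; auto.
    + rewrite upd_eq, upd_same. f_equal. ring.
Qed.

Lemma Cper_shiftZ f x i (n : Z) : Cper d f -> (i < d)%nat -> f (upd x i (x i + IZR n)) = f x.
Proof.
  intros Hf Hi. destruct (Z_le_dec 0 n).
  - rewrite <- (Z2Nat.id n l), <- INR_IZR_INZ. now apply Cper_shift1.
  - set (y := upd x i (x i + IZR n)).
    assert (x = upd y i (y i + INR (Z.to_nat (- n)))).
    { unfold y. rewrite upd_eq, upd_same. rewrite INR_IZR_INZ, Z2Nat.id by lia. rewrite opp_IZR.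
      apply functional_extensionality; intro m; unfold upd. destruct (Nat.eqb_spec m i); subst; ring. }
    transitivity (f (upd y i (y i + INR (Z.to_nat (- n))))). { symmetry. now apply Cper_shift1. } rewrite <- H. reflexivity.
Qed.

Lemma Cper_int f x y : Cper d f -> (forall i, (i < d)%nat -> exists n : Z, y i = x i + IZR n) -> f y = f x.
Proof.
  intros Hf H.
  set (z := fun (m : nat) (i : nat) => if Nat.ltb i m then y i else x i).
  assert (forall m, (m <= d)%nat -> f (z m) = f x).
  { induction m; intros Hm.
    - reflexivity.
    - destruct (H m ltac:(lia)) as [n Hn].
      replace (z (S m)) with (upd (z m) m (z m m + IZR n)).
      + rewrite Cper_shiftZ; auto; try lia. apply IHm; lia.
      + apply functional_extensionality; intro i. unfold z, upd.
        destruct (Nat.eqb_spec i m).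
        * subst. rewrite Nat.ltb_irrefl. assert (Nat.ltb m (S m) = true) by (apply Nat.ltb_lt; lia).
          rewrite H0. lra.
        * destruct (Nat.ltb_spec i m); destruct (Nat.ltb_spec i (S m)); auto; lia. }
  rewrite <- (H0 d (le_n d)). destruct Hf as [H1 _]. apply H1.
  intros i Hi. unfold z. destruct (Nat.ltb_spec i d); auto; lia.
Qed.

End CperSec.

Fixpoint mkseq (g : nat * nat -> nat) (n : nat) : nat :=
  match n with O => g (O, O) | S m => g (S (mkseq g m), S m) end.

Definition sincr (phi : nat -> nat) := forall n, (phi n < phi (S n))%nat.

Lemma sincr_ge phi : sincr phi -> forall n, (n <= phi n)%nat.
Proof. intros H n; induction n; [lia|]. specialize (H n). lia. Qed.
Lemma sincr_lt phi : sincr phi -> forall a b, (a < b)%nat -> (phi a < phi b)%nat.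
Proof.
  intros H a b Hab. induction b; [lia|].
  destruct (Nat.eq_dec a b); subst. apply H. specialize (H b). specialize (IHb ltac:(lia)). lia.
Qed.
Lemma sincr_comp phi psi : sincr phi -> sincr psi -> sincr (fun n => phi (psi n)).
Proof. intros H1 H2 n. apply sincr_lt; auto. Qed.

Lemma Un_cv_sub u l psi : sincr psi -> Un_cv u l -> Un_cv (fun n => u (psi n)) l.
Proof.
  intros Hp H eps He. destruct (H eps He) as [N HN]. exists N. intros n Hn.
  apply HN. pose proof (sincr_ge psi Hp n). lia.
Qed.

Lemma subseq1 (a : nat -> R) : (forall n, 0 <= a n <= 1) ->
  exists phi l, sincr phi /\ Un_cv (fun n => a (phi n)) l.
Proof.
  intros Ha. destruct (Bolzano_Weierstrass a _ (compact_P3 0 1) Ha) as [l Hl].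
  assert (H : forall p : nat * nat, exists q, (fst p <= q)%nat /\ Rabs (a q - l) < / (INR (snd p) + 1)).
  { intros [N n]. simpl.
    assert (Hp : 0 < / (INR n + 1)) by (apply Rinv_0_lt_compat; pose proof (pos_INR n); lra).
    destruct (Hl (disc l (mkposreal _ Hp)) N) as [q [Hq1 Hq2]].
    - exists (mkposreal _ Hp). intros y Hy; auto.
    - exists q; split; auto. }
  destruct (my_choice _ H) as [g Hg].
  exists (mkseq g), l. split.
  - intro n. simpl. destruct (Hg (S (mkseq g n), S n)) as [H1 _]. simpl in H1. lia.
  - intros eps He. destruct (archimed (/ eps)) as [Hup _].
    assert (0 <= IZR (up (/ eps))). { pose proof (Rinv_0_lt_compat eps He). lra. }
    exists (Z.to_nat (up (/eps))). intros n Hn. unfold Rdist.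
    assert (Hb : Rabs (a (mkseq g n) - l) < / (INR n + 1)).
    { destruct n; simpl; [apply (Hg (0,0)%nat) | apply (Hg (S (mkseq g n), S n))]. }
    eapply Rlt_le_trans; [apply Hb|].
    assert (INR (Z.to_nat (up (/eps))) <= INR n) by (apply le_INR; lia).
    rewrite INR_IZR_INZ, Z2Nat.id in H1 by (apply le_IZR; lra).
    rewrite <- (Rinv_inv eps). apply Rinv_le_contravar. apply Rinv_0_lt_compat; auto. lra.
Qed.

Lemma subseqd (m : nat) (u : nat -> vec) : (forall n i, (i < m)%nat -> 0 <= u n i <= 1) ->
  exists phi z, sincr phi /\ forall i, (i < m)%nat -> Un_cv (fun n => u (phi n) i) (z i).
Proof.
  induction m; intros Hu.
  - exists (fun n => n), (fun _ => 0). split. intro n; lia. intros; lia.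
  - destruct IHm as [phi [z [Hphi Hz]]]. { intros; apply Hu; lia. }
    destruct (subseq1 (fun n => u (phi n) m)) as [psi [l [Hpsi Hl]]]. { intros; apply Hu; lia. }
    exists (fun n => phi (psi n)), (fun i => if Nat.eqb i m then l else z i). split.
    + now apply sincr_comp.
    + intros i Hi. destruct (Nat.eqb_spec i m). { subst. auto. }
      apply (Un_cv_sub (fun n => u (phi n) i)); auto. apply Hz. lia.
Qed.

Lemma finite_eventually (d : nat) (P : nat -> nat -> Prop) :
  (forall i, (i < d)%nat -> exists N, forall n, (N <= n)%nat -> P i n) ->
  exists N, forall i, (i < d)%nat -> forall n, (N <= n)%nat -> P i n.
Proof.
  induction d; intros H. { exists O; intros; lia. }
  destruct IHd as [N1 H1]. { intros; apply H; lia. }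
  destruct (H d ltac:(lia)) as [N2 H2]. exists (Nat.max N1 N2). intros i Hi n Hn.
  destruct (Nat.eq_dec i d). { subst; apply H2; lia. } apply H1; lia.
Qed.

Definition fracv (d : nat) (x : vec) : vec := fun i => x i - IZR (Int_part (x i)).

Lemma fracv_bounds d x i : 0 <= fracv d x i <= 1.
Proof. unfold fracv. destruct (base_Int_part (x i)). lra. Qed.

Lemma Cper_fracv d f x v : Cper d f ->
  f (vadd (fracv d x) v) = f (vadd x v).
Proof.
  intros Hf. apply (Cper_int d); auto. intros i Hi. exists (- Int_part (x i))%Z. rewrite opp_IZR. unfold vadd, fracv; ring.

Qed.

Lemma Cper_UC d f : Cper d f -> forall eps, 0 < eps -> exists delta, 0 < delta /\
  forall x y : vec, (forall i, (i < d)%nat -> Rabs (y i - x i) < delta) -> Rabs (f y - f x) < eps.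
Proof.
  intros Hf eps He. apply NNPP. intro Hn.
  assert (Hs : forall n : nat, exists p : vec * vec,
    (forall i, (i < d)%nat -> Rabs (snd p i - fst p i) < / (INR n + 1)) /\ eps <= Rabs (f (snd p) - f (fst p))).
  { intro n. apply NNPP; intro Hc. apply Hn. exists (/ (INR n + 1)). split.
    { apply Rinv_0_lt_compat; pose proof (pos_INR n); lra. }
    intros x y Hxy. apply Rnot_le_lt. intro Hle. apply Hc. exists (x, y). simpl. auto. }
  destruct (my_choice _ Hs) as [g Hg].
  set (xs := fun n => fracv d (fst (g n))).
  set (ys := fun n => vadd (snd (g n)) (fun i => - IZR (Int_part (fst (g n) i)))).
  assert (Ex : forall n, f (xs n) = f (fst (g n))).
  { intro n. unfold xs. replace (fracv d (fst (g n))) with (vadd (fracv d (fst (g n))) (fun _ => 0)).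
    rewrite Cper_fracv; auto. f_equal. apply functional_extensionality; intro; unfold vadd; ring.
    apply functional_extensionality; intro; unfold vadd; ring. }
  assert (Ey : forall n, f (ys n) = f (snd (g n))).
  { intro n. unfold ys. apply (Cper_int d); auto. intros i Hi. exists (- Int_part (fst (g n) i))%Z.
    unfold vadd. rewrite opp_IZR. ring. }
  destruct (subseqd d xs) as [phi [z [Hphi Hz]]]. { intros; apply fracv_bounds. }
  destruct Hf as [F1 [F2 F3]].
  destruct (F3 z (eps / 2) ltac:(lra)) as [dz [Hdz Pz]].
  destruct (finite_eventually d (fun i n => Rabs (xs (phi n) i - z i) < dz / 2)) as [N1 HN1].
  { intros i Hi. destruct (Hz i Hi (dz/2) ltac:(lra)) as [N HN]. exists N. intros n Hn0. apply HN. lia. }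
  destruct (archimed (2 / dz)) as [Hup _].
  set (N := Nat.max N1 (Z.to_nat (up (2 / dz)))).
  assert (HNb : / (INR (phi N) + 1) < dz / 2).
  { assert (0 < 2 / dz) by (apply Rdiv_lt_0_compat; lra).
    assert (IZR (up (2/dz)) <= INR (phi N)).
    { rewrite <- (Z2Nat.id (up (2/dz))) by (apply le_IZR; lra). rewrite <- INR_IZR_INZ.
      apply le_INR. pose proof (sincr_ge phi Hphi N). unfold N in *. lia. }
    replace (dz / 2) with (/ (2 / dz)) by (field; lra).
    apply Rinv_lt_contravar. apply Rmult_lt_0_compat; auto. pose proof (pos_INR (phi N)); lra. lra. }
  destruct (Hg (phi N)) as [Hclose Hfar].
  assert (A1 : Rabs (f (xs (phi N)) - f z) < eps / 2).
  { apply Pz. intros i Hi. assert (Rabs (xs (phi N) i - z i) < dz / 2) by (apply HN1; auto; unfold N; lia). lra. }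
  assert (A2 : Rabs (f (ys (phi N)) - f z) < eps / 2).
  { apply Pz. intros i Hi.
    assert (Rabs (xs (phi N) i - z i) < dz / 2) by (apply HN1; auto; unfold N; lia).
    specialize (Hclose i Hi).
    assert (ys (phi N) i - xs (phi N) i = snd (g (phi N)) i - fst (g (phi N)) i).
    { unfold ys, xs, vadd, fracv. ring. }
    replace (ys (phi N) i - z i) with ((ys (phi N) i - xs (phi N) i) + (xs (phi N) i - z i)) by ring.
    eapply Rle_lt_trans. apply Rabs_triang. rewrite H0. lra. }
  rewrite Ex in A1. rewrite Ey in A2.
  assert (Rabs (f (snd (g (phi N))) - f (fst (g (phi N)))) < eps).
  { replace (f (snd (g (phi N))) - f (fst (g (phi N)))) with
      ((f (snd (g (phi N))) - f z) - (f (fst (g (phi N))) - f z)) by ring.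
    eapply Rle_lt_trans. apply Rabs_triang. rewrite Rabs_Ropp. lra. }
  lra.
Qed.

Lemma Cper_bounded d f : Cper d f -> exists C, 0 <= C /\ forall x, Rabs (f x) <= C.
Proof.
  intros Hf. apply NNPP. intro Hn.
  assert (Hs : forall n : nat, exists x : vec, INR n < Rabs (f x)).
  { intro n. apply NNPP; intro Hc. apply Hn. exists (INR n). split. apply pos_INR.
    intros x. apply Rnot_lt_le. intro. apply Hc. exists x; auto. }
  destruct (my_choice _ Hs) as [g Hg].
  set (xs := fun n => fracv d (g n)).
  assert (Ex : forall n, f (xs n) = f (g n)).
  { intro n. unfold xs. apply (Cper_int d); auto. intros i Hi. exists (- Int_part (g n i))%Z. rewrite opp_IZR.
    unfold fracv; ring. }
  destruct (subseqd d xs) as [phi [z [Hphi Hz]]]. { intros; apply fracv_bounds. }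
  destruct Hf as [F1 [F2 F3]].
  destruct (F3 z 1 ltac:(lra)) as [dz [Hdz Pz]].
  destruct (finite_eventually d (fun i n => Rabs (xs (phi n) i - z i) < dz)) as [N1 HN1].
  { intros i Hi. destruct (Hz i Hi dz Hdz) as [N HN]. exists N. intros n Hn0. apply HN. lia. }
  destruct (archimed (Rabs (f z) + 1)) as [Hup _].
  assert (0 <= IZR (up (Rabs (f z) + 1))) by (pose proof (Rabs_pos (f z)); lra).
  set (N := Nat.max N1 (Z.to_nat (up (Rabs (f z) + 1)))).
  assert (IZR (up (Rabs (f z) + 1)) <= INR (phi N)).
  { rewrite <- (Z2Nat.id (up _)) by (apply le_IZR; lra). rewrite <- INR_IZR_INZ.
    apply le_INR. pose proof (sincr_ge phi Hphi N). unfold N in *. lia. }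
  assert (A1 : Rabs (f (xs (phi N)) - f z) < 1).
  { apply Pz. intros i Hi. apply HN1; auto. unfold N; lia. }
  specialize (Hg (phi N)). rewrite <- Ex in Hg.
  pose proof (Rabs_triang_inv (f (xs (phi N))) (f z)). lra.
Qed.

Lemma m_ext (m : meas) f g : (forall x, f x = g x) -> m f = m g.
Proof. intros H. f_equal. now apply functional_extensionality. Qed.

Section MeasSec.
Variable d : nat.
Variable m : meas.
Hypothesis Hm : IsMeasure d m.

Lemma m_lin a b f g : Cper d f -> Cper d g -> m (fun x => a * f x + b * g x) = a * m f + b * m g.
Proof.
  intros Hf Hg. destruct Hm as [H1 [H2 _]].
  rewrite H1 by (apply Cper_scal; auto). rewrite !H2; auto.
Qed.

Lemma m_plus f g : Cper d f -> Cper d g -> m (fun x => f x + g x) = m f + m g.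
Proof. intros; destruct Hm as [H1 _]; auto. Qed.
Lemma m_scal a f : Cper d f -> m (fun x => a * f x) = a * m f.
Proof. intros; destruct Hm as [_ [H2 _]]; auto. Qed.
Lemma m_minus f g : Cper d f -> Cper d g -> m (fun x => f x - g x) = m f - m g.
Proof.
  intros. rewrite <- (m_ext m (fun x => 1 * f x + (-1) * g x)) by (intros; ring).
  rewrite m_lin; auto; ring.
Qed.
Lemma m_zero : m (fun _ => 0) = 0.
Proof.
  rewrite <- (m_ext m (fun x => 0 * (fun _ => 1) x)) by (intros; ring).
  rewrite m_scal. ring. apply Cper_const.
Qed.
Lemma m_const c : m (fun _ => c) = c * mass m.
Proof.
  rewrite <- (m_ext m (fun x => c * (fun _ => 1) x)) by (intros; ring).
  rewrite m_scal. reflexivity. apply Cper_const.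
Qed.
Lemma m_pos f : Cper d f -> (forall x, 0 <= f x) -> 0 <= m f.
Proof. destruct Hm as [_ [_ H3]]; auto. Qed.
Lemma m_mono f g : Cper d f -> Cper d g -> (forall x, f x <= g x) -> m f <= m g.
Proof.
  intros. assert (0 <= m (fun x => g x - f x)).
  { apply m_pos. apply Cper_minus; auto. intros x; specialize (H1 x); lra. }
  rewrite m_minus in H2; auto. lra.
Qed.
Lemma mass_pos : 0 <= mass m.
Proof. apply m_pos. apply Cper_const. intros; lra. Qed.
Lemma m_bound f c : Cper d f -> (forall x, Rabs (f x) <= c) -> Rabs (m f) <= c * mass m.
Proof.
  intros Hf Hc. rewrite <- m_const.
  assert (m f <= m (fun _ => c)).
  { apply m_mono; auto. apply Cper_const. intros x; specialize (Hc x). apply Rabs_le_inv in Hc; lra. }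
  assert (m (fun x => -1 * f x) <= m (fun _ => c)).
  { apply m_mono; auto. apply Cper_scal; auto. apply Cper_const. intros x; specialize (Hc x). apply Rabs_le_inv in Hc; lra. }
  rewrite m_scal in H0; auto. apply Rabs_le. lra.
Qed.
End MeasSec.

Lemma tr_UC d f : Cper d f -> forall eps, 0 < eps -> exists delta, 0 < delta /\
  forall a b : vec, (forall i, (i < d)%nat -> Rabs (a i - b i) < delta) ->
  forall x, Rabs (tr a f x - tr b f x) < eps.
Proof.
  intros Hf eps He. destruct (Cper_UC d f Hf eps He) as [dl [Hd H]]. exists dl; split; auto.
  intros a b Hab x. unfold tr. apply H. intros i Hi. unfold vadd.
  replace (x i + a i - (x i + b i)) with (a i - b i) by ring. auto.
Qed.

Lemma m_tr_UC d m f : IsMeasure d m -> Cper d f -> forall eps, 0 < eps -> exists delta, 0 < delta /\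
  forall a b : vec, (forall i, (i < d)%nat -> Rabs (a i - b i) < delta) ->
  Rabs (m (tr a f) - m (tr b f)) <= eps * mass m.
Proof.
  intros Hm Hf eps He. destruct (tr_UC d f Hf eps He) as [dl [Hd H]]. exists dl; split; auto.
  intros a b Hab. rewrite <- (m_minus d); auto; try apply Cper_tr; auto.
  apply (m_bound d); auto. apply Cper_minus; apply Cper_tr; auto.
  intros x. left. apply H; auto.
Qed.
From Coquelicot Require Import Coquelicot.
Open Scope R_scope.

Definition ctn (h : R -> R) (t : R) : Prop :=
  forall eps, 0 < eps -> exists delta, 0 < delta /\ forall u, Rabs (u - t) < delta -> Rabs (h u - h t) < eps.

Lemma ctn_cont (h : R -> R) t : ctn h t -> continuous h t.
Proof.
  intros H. apply continuity_pt_filterlim. intros eps He.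
  destruct (H eps He) as [dl [Hd Hdl]]. exists dl; split; auto.
  intros x [_ Hx]. simpl in *. unfold Rdist in *. auto.
Qed.

Lemma cont_ctn (h : R -> R) t : continuous h t -> ctn h t.
Proof.
  intros H. apply continuity_pt_filterlim in H. intros eps He.
  destruct (H eps He) as [dl [Hd Hdl]]. exists dl; split; auto.
  intros u Hu. destruct (Req_dec u t). { subst. rewrite Rminus_diag, Rabs_R0. auto. }
  apply (Hdl u). split. { split. exact I. auto. } simpl. unfold Rdist; auto.
Qed.

Lemma cont_abs_R (h : R -> R) t : continuous h t -> continuous (fun u => Rabs (h u)) t.
Proof.
  intros H. apply ctn_cont. apply cont_ctn in H. intros eps He. destruct (H eps He) as [dl [Hd P]].
  exists dl; split; auto. intros u Hu. eapply Rle_lt_trans. apply Rabs_triang_inv2. auto.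
Qed.

Lemma cont_exp_lin c t : continuous (fun u => exp (- (c * u))) t.
Proof. apply (ex_derive_continuous (K:=R_AbsRing) (V:=R_NormedModule)). auto_derive. auto. Qed.

Lemma cont_mult_R (f g : R -> R) (t : R) : continuous f t -> continuous g t -> continuous (fun u => f u * g u) t.
Proof. intros. apply (continuous_mult f g t); auto. Qed.

Lemma RInt_lin_R (f g : R -> R) a b p q : ex_RInt f a b -> ex_RInt g a b ->
  RInt (fun x => p * f x + q * g x) a b = p * RInt f a b + q * RInt g a b.
Proof.
  intros Hf Hg.
  rewrite (RInt_plus (fun x => p * f x) (fun x => q * g x)).
  - assert (E1 : RInt (fun x => p * f x) a b = p * RInt f a b) by (apply (RInt_scal f a b p Hf)).
    assert (E2 : RInt (fun x => q * g x) a b = q * RInt g a b) by (apply (RInt_scal g a b q Hg)).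
    unfold plus; simpl. rewrite E1, E2. reflexivity.
  - apply (ex_RInt_scal f a b p Hf).
  - apply (ex_RInt_scal g a b q Hg).
Qed.

Lemma ex_RInt_lin_R (f g : R -> R) a b p q : ex_RInt f a b -> ex_RInt g a b ->
  ex_RInt (fun x => p * f x + q * g x) a b.
Proof.
  intros Hf Hg. apply (ex_RInt_plus (fun x => p * f x) (fun x => q * g x)).
  apply (ex_RInt_scal f a b p Hf). apply (ex_RInt_scal g a b q Hg).
Qed.

Lemma ex_RInt_cont (h : R -> R) a b : (forall t, continuous h t) -> ex_RInt h a b.
Proof. intros H. apply (ex_RInt_continuous (V:=R_CompleteNormedModule)). intros; auto. Qed.

Definition RI (h : R -> R) (a b : R) : R := RInt h a b.

Lemma RI_lin (f g : R -> R) a b p q : ex_RInt f a b -> ex_RInt g a b ->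
  RI (fun x => p * f x + q * g x) a b = p * RI f a b + q * RI g a b.
Proof. apply RInt_lin_R. Qed.

Lemma RI_Chasles (h : R -> R) a b c : ex_RInt h a b -> ex_RInt h b c ->
  RI h a b + RI h b c = RI h a c.
Proof. intros. apply (RInt_Chasles h a b c); auto. Qed.

Lemma RI_le (f g : R -> R) a b : a <= b -> ex_RInt f a b -> ex_RInt g a b ->
  (forall x, a < x < b -> f x <= g x) -> RI f a b <= RI g a b.
Proof. apply RInt_le. Qed.

Lemma RI_ge0 (f : R -> R) a b : a <= b -> ex_RInt f a b -> (forall x, a < x < b -> 0 <= f x) -> 0 <= RI f a b.
Proof. apply RInt_ge_0. Qed.

Lemma RI_abs_le_const (f : R -> R) a b M : a <= b -> ex_RInt f a b ->
  (forall t, a <= t <= b -> Rabs (f t) <= M) -> Rabs (RI f a b) <= (b - a) * M.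
Proof. apply abs_RInt_le_const. Qed.

Lemma RI_ext (f g : R -> R) a b : (forall x, Rmin a b < x < Rmax a b -> f x = g x) -> RI f a b = RI g a b.
Proof. apply RInt_ext. Qed.

Lemma RI_const c a b : RI (fun _ => c) a b = (b - a) * c.
Proof. unfold RI. rewrite RInt_const. reflexivity. Qed.

Lemma RI_point (f : R -> R) a : RI f a a = 0.
Proof. unfold RI. rewrite RInt_point. reflexivity. Qed.

Lemma RI_scal (f : R -> R) a b p : ex_RInt f a b -> RI (fun x => p * f x) a b = p * RI f a b.
Proof. intros. apply (RInt_scal f a b p); auto. Qed.

Lemma RI_shift (h : R -> R) s a b : (forall t, continuous h t) ->
  RI (fun t => h (t + s)) a b = RI h (a + s) (b + s).
Proof.
  intros Hc. unfold RI.
  assert (E := RInt_comp_lin (V:=R_CompleteNormedModule) h 1 s a b (ex_RInt_cont _ _ _ Hc)).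
  replace (a + s) with (1 * a + s) by ring. replace (b + s) with (1 * b + s) by ring.
  rewrite <- E. apply RInt_ext. intros. unfold scal; simpl; unfold mult; simpl. rewrite !Rmult_1_l. reflexivity.
Qed.

Lemma RChasles (h : R -> R) a b c : ex_RInt h a b -> ex_RInt h b c ->
  RInt h a b + RInt h b c = RInt h a c.
Proof. intros. apply (RInt_Chasles h a b c); auto. Qed.

Lemma RInt_const_R c a b : RInt (fun _ => c) a b = (b - a) * c.
Proof. rewrite RInt_const. reflexivity. Qed.

Lemma RInt_exp c a b : c <> 0 ->
  RInt (fun t => exp (- (c * t))) a b = (exp (- (c * a)) - exp (- (c * b))) / c.
Proof.
  intros Hc. apply (is_RInt_unique (V:=R_CompleteNormedModule)).
  replace ((exp (- (c * a)) - exp (- (c * b))) / c) with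
    (minus ((fun t => - exp (- (c * t)) / c) b) ((fun t => - exp (- (c * t)) / c) a)).
  2:{ unfold minus, plus, opp; simpl. field; auto. }
  apply (is_RInt_derive (V:=R_CompleteNormedModule) (fun t => - exp (- (c * t)) / c)).
  - intros x _. auto_derive; auto. field; auto.
  - intros x _. apply cont_exp_lin.
Qed.

Lemma RI_exp c a b : c <> 0 ->
  RI (fun t => exp (- (c * t))) a b = (exp (- (c * a)) - exp (- (c * b))) / c.
Proof. apply RInt_exp. Qed.

Lemma ex_RInt_exp c a b : ex_RInt (fun t => exp (- (c * t))) a b.
Proof. apply ex_RInt_cont. intros; apply cont_exp_lin. Qed.

Lemma exp_neg_le1 x : 0 <= x -> exp (- x) <= 1.
Proof. intros. rewrite <- exp_0. destruct H. left; apply exp_increasing; lra. subst. rewrite Ropp_0; lra. Qed.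

Lemma exp_neg_small x : 0 <= x -> exp (- x) <= / (1 + x).
Proof.
  intros Hx. rewrite exp_Ropp. apply Rinv_le_contravar. lra. apply exp_ineq1_le.
Qed.

Lemma one_minus_exp x : 0 <= x -> 0 <= 1 - exp (- x) <= x.
Proof. intros. split. pose proof (exp_neg_le1 x H); lra. pose proof (exp_ineq1_le (- x)). lra. Qed.

Definition ImpR (h : R -> R) (L : R) : Prop :=
  (forall T, 0 <= T -> ex_RInt h 0 T) /\
  (forall eps, 0 < eps -> exists M, 0 <= M /\ forall T, M <= T -> Rabs (RI h 0 T - L) < eps).

Lemma ImpR_Improper h L : ImpR h L -> ImproperInt h L.
Proof.
  intros [H1 H2]. split.
  - intros T HT. exists (ex_RInt_Reals_0 _ _ _ (H1 T HT)). auto.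
  - intros eps He. destruct (H2 eps He) as [M [HM HMT]]. exists M. intros T pr HT.
    rewrite <- RInt_Reals. auto.
Qed.

Lemma ImpR_unique h L1 L2 : ImpR h L1 -> ImpR h L2 -> L1 = L2.
Proof.
  intros [_ H1] [_ H2]. apply NNPP; intro Hn.
  assert (He : 0 < Rabs (L1 - L2) / 2). { assert (L1 - L2 <> 0) by lra. pose proof (Rabs_pos_lt _ H). lra. }
  destruct (H1 _ He) as [M1 [_ P1]]. destruct (H2 _ He) as [M2 [_ P2]].
  specialize (P1 (Rmax M1 M2) (Rmax_l _ _)). specialize (P2 (Rmax M1 M2) (Rmax_r _ _)).
  set (I := RI h 0 (Rmax M1 M2)) in *.
  pose proof (Rabs_triang (L1 - I) (I - L2)). replace (L1 - I + (I - L2)) with (L1 - L2) in H by ring.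
  rewrite <- (Rabs_Ropp (L1 - I)) in H. replace (- (L1 - I)) with (I - L1) in H by ring. lra.
Qed.

Lemma ImpR_ext h g L : (forall t, h t = g t) -> ImpR h L -> ImpR g L.
Proof.
  intros E H. replace g with h; auto. now apply functional_extensionality.
Qed.

Lemma ImpR_lin h g Lh Lg p q : ImpR h Lh -> ImpR g Lg ->
  ImpR (fun t => p * h t + q * g t) (p * Lh + q * Lg).
Proof.
  intros [H1 H2] [G1 G2]. split.
  - intros; apply ex_RInt_lin_R; auto.
  - intros eps He. set (e' := eps / (2 * (Rabs p + Rabs q + 1))).
    assert (He' : 0 < e'). { unfold e'. apply Rdiv_lt_0_compat; auto. pose proof (Rabs_pos p); pose proof (Rabs_pos q); lra. }
    destruct (H2 e' He') as [M1 [HM1 P1]]. destruct (G2 e' He') as [M2 [HM2 P2]].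
    exists (Rmax M1 M2). split. { eapply Rle_trans; [apply HM1|apply Rmax_l]. }
    intros T HT. assert (0 <= T) by (eapply Rle_trans; [apply HM1| eapply Rle_trans; [apply Rmax_l|apply HT]]).
    rewrite RI_lin; auto.
    specialize (P1 T ltac:(eapply Rle_trans; [apply Rmax_l|apply HT])).
    specialize (P2 T ltac:(eapply Rle_trans; [apply Rmax_r|apply HT])).
    replace (p * RI h 0 T + q * RI g 0 T - (p * Lh + q * Lg)) with
      (p * (RI h 0 T - Lh) + q * (RI g 0 T - Lg)) by ring.
    eapply Rle_lt_trans. apply Rabs_triang. rewrite !Rabs_mult.
    pose proof (Rabs_pos p); pose proof (Rabs_pos q).
    assert (Rabs p * Rabs (RI h 0 T - Lh) <= Rabs p * e') by (apply Rmult_le_compat_l; lra).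
    assert (Rabs q * Rabs (RI g 0 T - Lg) <= Rabs q * e') by (apply Rmult_le_compat_l; lra).
    assert (e' * (2 * (Rabs p + Rabs q + 1)) = eps) by (unfold e'; field; lra).
    nra.
Qed.

Lemma ImpR_scal h L c : ImpR h L -> ImpR (fun t => c * h t) (c * L).
Proof.
  intros H. eapply ImpR_ext; [| replace (c * L) with (c * L + 0 * L) by ring; apply (ImpR_lin h h L L c 0 H H)].
  intros; simpl; ring.
Qed.

Lemma ImpR_le h g Lh Lg : ImpR h Lh -> ImpR g Lg -> (forall t, 0 <= t -> h t <= g t) -> Lh <= Lg.
Proof.
  intros [H1 H2] [G1 G2] Hle. apply Rnot_lt_le. intro Hlt.
  set (e := (Lh - Lg) / 2). assert (0 < e) by (unfold e; lra).
  destruct (H2 e H) as [M1 [HM1 P1]]. destruct (G2 e H) as [M2 [HM2 P2]].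
  set (T := Rmax M1 M2). assert (0 <= T) by (unfold T; eapply Rle_trans; [apply HM1|apply Rmax_l]).
  specialize (P1 T (Rmax_l _ _)). specialize (P2 T (Rmax_r _ _)).
  assert (RI h 0 T <= RI g 0 T).
  { apply RInt_le; auto. intros x Hx. apply Hle. lra. }
  apply Rabs_def2 in P1. apply Rabs_def2 in P2. unfold e in *. lra.
Qed.

Lemma ImpR_abs_le h g Lh Lg : ImpR h Lh -> ImpR g Lg -> (forall t, 0 <= t -> Rabs (h t) <= g t) -> Rabs Lh <= Lg.
Proof.
  intros Hh Hg Hle. apply Rabs_le. split.
  - assert (- Lg <= Lh).
    { apply (ImpR_le (fun t => -1 * g t) h). 
      replace (- Lg) with (-1 * Lg) by ring. apply ImpR_scal; auto. auto.
      intros t Ht. specialize (Hle t Ht). apply Rabs_le_inv in Hle. lra. }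
    auto.
  - apply (ImpR_le h g); auto. intros t Ht. specialize (Hle t Ht). apply Rabs_le_inv in Hle. lra.
Qed.

Lemma ImpR_exp c : 0 < c -> ImpR (fun t => exp (- (c * t))) (/ c).
Proof.
  intros Hc. split.
  - intros; apply ex_RInt_cont. intros; apply cont_exp_lin.
  - intros eps He. exists (/ (c * c * eps)). split. { left. apply Rinv_0_lt_compat. apply Rmult_lt_0_compat; nra. }
    intros T HT. rewrite RI_exp by lra.
    assert (0 < / (c * c * eps)) by (apply Rinv_0_lt_compat; apply Rmult_lt_0_compat; nra).
    rewrite Rmult_0_r, Ropp_0, exp_0.
    replace ((1 - exp (- (c * T))) / c - / c) with (- (exp (- (c * T)) / c)) by (field; lra).
    rewrite Rabs_Ropp. rewrite Rabs_right.
    2:{ apply Rle_ge. unfold Rdiv. apply Rmult_le_pos. left; apply exp_pos. left; apply Rinv_0_lt_compat; auto. }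
    assert (HcT : 0 <= c * T) by nra.
    pose proof (exp_neg_small (c * T) HcT) as Hx.
    assert (Hy : / (1 + c * T) < c * eps).
    { rewrite <- (Rinv_inv (c * eps)). apply Rinv_lt_contravar.
      apply Rmult_lt_0_compat. apply Rinv_0_lt_compat; nra. lra.
      assert (Hz : c * / (c * c * eps) = / (c * eps)) by (field; split; lra).
      assert (c * T >= / (c * eps)) by (rewrite <- Hz; apply Rle_ge; apply Rmult_le_compat_l; lra). lra. }
    apply (Rmult_lt_reg_r c); auto. unfold Rdiv. rewrite Rmult_assoc, Rinv_l by lra. lra.
Qed.

Lemma ImpR_exists (h : R -> R) K c : 0 < c -> (forall t, continuous h t) ->
  (forall t, 0 <= t -> Rabs (h t) <= K * exp (- (c * t))) -> exists L, ImpR h L.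
Proof.
  intros Hc Hcont Hb.
  assert (HK : 0 <= K). { specialize (Hb 0 (Rle_refl 0)). pose proof (Rabs_pos (h 0)).
    rewrite Rmult_0_r, Ropp_0, exp_0 in Hb. lra. }
  assert (Hex : forall a b, ex_RInt h a b) by (intros; apply ex_RInt_cont; auto).
  assert (Hdiff : forall T1 T2, 0 <= T1 <= T2 -> Rabs (RI h 0 T2 - RI h 0 T1) <= K / c * exp (- (c * T1))).
  { intros T1 T2 HT. rewrite <- (RI_Chasles h 0 T1 T2) by auto.
    replace (RI h 0 T1 + RI h T1 T2 - RI h 0 T1) with (RI h T1 T2) by ring.
    eapply Rle_trans. apply abs_RInt_le. lra. auto.
    eapply Rle_trans. apply (RInt_le _ (fun t => K * exp (- (c * t)))). lra.
    apply ex_RInt_cont; intros; apply cont_abs_R; auto.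
    apply ex_RInt_cont; intros; apply cont_mult_R. apply continuous_const. apply cont_exp_lin.
    intros; apply Hb; lra.
    change (RInt (fun t => K * exp (- (c * t))) T1 T2) with (RI (fun t => K * exp (- (c * t))) T1 T2).
    rewrite (RI_scal (fun t => exp (- (c * t))) T1 T2 K) by apply ex_RInt_exp.
    rewrite RI_exp by lra.
    unfold Rdiv. rewrite (Rmult_comm (exp (- (c * T1)) - exp (- (c * T2))) (/ c)).
    rewrite <- Rmult_assoc. apply Rmult_le_compat_l. apply Rmult_le_pos; auto; left; apply Rinv_0_lt_compat; auto.
    pose proof (exp_pos (- (c * T2))). lra. }
  assert (Htail : forall eps, 0 < eps -> exists M, 0 <= M /\ forall T, M <= T -> K / c * exp (- (c * T)) < eps).
  { intros eps He. exists (K / (c * c * eps)). split.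
    { unfold Rdiv. apply Rmult_le_pos; auto. left; apply Rinv_0_lt_compat; apply Rmult_lt_0_compat; nra. }
    intros T HT. assert (0 <= T). { eapply Rle_trans; [|apply HT]. unfold Rdiv. apply Rmult_le_pos; auto. left; apply Rinv_0_lt_compat; apply Rmult_lt_0_compat; nra. }
    assert (0 <= c * T) by nra. pose proof (exp_neg_small (c * T) H0).
    assert (K / c * exp (- (c * T)) <= K / c * / (1 + c * T)).
    { apply Rmult_le_compat_l; auto. unfold Rdiv; apply Rmult_le_pos; auto; left; apply Rinv_0_lt_compat; auto. }
    eapply Rle_lt_trans; [apply H2|].
    assert (c * T >= K / (c * eps)).
    { assert (c * (K / (c * c * eps)) = K / (c * eps)) by (field; split; lra).
      rewrite <- H3. apply Rle_ge. apply Rmult_le_compat_l; lra. }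
    replace (K / c * / (1 + c * T)) with (K / (c * (1 + c * T))) by (field; split; lra).
    apply (Rmult_lt_reg_r (c * (1 + c * T))). nra.
    unfold Rdiv. rewrite Rmult_assoc, Rinv_l by nra. rewrite Rmult_1_r.
    assert (K <= eps * c * (c * T)).
    { assert (K / (c * eps) * (c * eps) = K) by (field; split; lra).
      assert (K / (c * eps) * (c * eps) <= c * T * (c * eps)) by (apply Rmult_le_compat_r; nra).
      nra. }
    nra. }
  set (u := fun n : nat => RI h 0 (INR n)).
  assert (Hc2 : Cauchy_crit u).
  { intros eps He. destruct (Htail (eps / 2) ltac:(lra)) as [M [HM PM]].
    destruct (archimed M) as [Hup _]. exists (Z.to_nat (up M)).
    assert (forall n, (n >= Z.to_nat (up M))%nat -> M <= INR n).
    { intros n Hn. apply le_INR in Hn. rewrite INR_IZR_INZ, Z2Nat.id in Hn. lra. apply le_IZR. lra. }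
    intros n m Hn Hm. unfold Rdist, u.
    destruct (Rle_dec (INR n) (INR m)).
    - rewrite <- Rabs_Ropp. replace (- (RI h 0 (INR n) - RI h 0 (INR m))) with (RI h 0 (INR m) - RI h 0 (INR n)) by ring.
      eapply Rle_lt_trans. apply Hdiff. split; auto. apply pos_INR. specialize (PM (INR n) (H n Hn)). lra.
    - eapply Rle_lt_trans. apply Hdiff. split; [apply pos_INR|lra]. specialize (PM (INR m) (H m Hm)). lra. }
  destruct (Rcomplete.R_complete u Hc2) as [L HL]. exists L. split.
  - intros; auto.
  - intros eps He. destruct (Htail (eps / 2) ltac:(lra)) as [M [HM PM]]. exists M; split; auto.
    intros T HT. destruct (HL (eps / 2) ltac:(lra)) as [N HN].
    destruct (archimed T) as [Hup _].
    set (n := Nat.max N (Z.to_nat (up T))).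
    assert (T <= INR n).
    { unfold n. assert (INR (Z.to_nat (up T)) <= INR (Nat.max N (Z.to_nat (up T)))) by (apply le_INR; lia).
      rewrite INR_IZR_INZ, Z2Nat.id in H. lra. apply le_IZR. assert (0 <= T) by lra. lra. }
    specialize (HN n ltac:(unfold n; lia)). unfold Rdist, u in HN.
    pose proof (Hdiff T (INR n) ltac:(lra)). specialize (PM T HT).
    replace (RI h 0 T - L) with (- (RI h 0 (INR n) - RI h 0 T) + (RI h 0 (INR n) - L)) by ring.
    eapply Rle_lt_trans. apply Rabs_triang. rewrite Rabs_Ropp. lra.
Qed.

Lemma ImpR_shift (h : R -> R) L s : (forall t, continuous h t) -> 0 <= s -> ImpR h L ->
  ImpR (fun t => h (t + s)) (L - RI h 0 s).
Proof.
  intros Hc Hs [H1 H2].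
  assert (Hex : forall a b, ex_RInt h a b) by (intros; apply ex_RInt_cont; auto).
  assert (E : forall T, RI (fun t => h (t + s)) 0 T = RI h s (T + s)).
  { intros T. rewrite RI_shift by auto. f_equal; ring. }
  split.
  - intros T HT. apply ex_RInt_cont. intros t. apply (continuous_comp (fun t => t + s) h).
    apply (continuous_plus (fun t => t) (fun _ => s)). apply continuous_id. apply continuous_const. auto.
  - intros eps He. destruct (H2 eps He) as [M [HM P]]. exists M; split; auto.
    intros T HT. rewrite E.
    replace (RI h s (T + s) - (L - RI h 0 s)) with (RI h 0 (T + s) - L).
    apply P; lra.
    rewrite <- (RI_Chasles h 0 s (T + s)) by auto. ring.
Qed.

Lemma LimRight0_unique h L1 L2 : LimRight0 h L1 -> LimRight0 h L2 -> L1 = L2.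
Proof.
  intros H1 H2. apply NNPP; intro Hn.
  assert (He : 0 < Rabs (L1 - L2) / 2). { assert (L1 - L2 <> 0) by lra. pose proof (Rabs_pos_lt _ H). lra. }
  destruct (H1 _ He) as [d1 [Hd1 P1]]. destruct (H2 _ He) as [d2 [Hd2 P2]].
  set (t := Rmin d1 d2 / 2). assert (0 < Rmin d1 d2) by (apply Rmin_pos; auto).
  specialize (P1 t ltac:(unfold t; pose proof (Rmin_l d1 d2); lra)).
  specialize (P2 t ltac:(unfold t; pose proof (Rmin_r d1 d2); lra)).
  pose proof (Rabs_triang (L1 - h t) (h t - L2)). replace (L1 - h t + (h t - L2)) with (L1 - L2) in H0 by ring.
  rewrite <- (Rabs_Ropp (L1 - h t)) in H0. replace (- (L1 - h t)) with (h t - L1) in H0 by ring. lra.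
Qed.

Lemma LimRight0_lin h g Lh Lg p q : LimRight0 h Lh -> LimRight0 g Lg ->
  LimRight0 (fun t => p * h t + q * g t) (p * Lh + q * Lg).
Proof.
  intros H G eps He. set (e' := eps / (2 * (Rabs p + Rabs q + 1))).
  assert (He' : 0 < e'). { unfold e'. apply Rdiv_lt_0_compat; auto. pose proof (Rabs_pos p); pose proof (Rabs_pos q); lra. }
  destruct (H e' He') as [d1 [Hd1 P1]]. destruct (G e' He') as [d2 [Hd2 P2]].
  exists (Rmin d1 d2). split. apply Rmin_pos; auto.
  intros t Ht. specialize (P1 t ltac:(pose proof (Rmin_l d1 d2); lra)). specialize (P2 t ltac:(pose proof (Rmin_r d1 d2); lra)).
  replace (p * h t + q * g t - (p * Lh + q * Lg)) with (p * (h t - Lh) + q * (g t - Lg)) by ring.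
  eapply Rle_lt_trans. apply Rabs_triang. rewrite !Rabs_mult.
  pose proof (Rabs_pos p); pose proof (Rabs_pos q).
  assert (Rabs p * Rabs (h t - Lh) <= Rabs p * e') by (apply Rmult_le_compat_l; lra).
  assert (Rabs q * Rabs (g t - Lg) <= Rabs q * e') by (apply Rmult_le_compat_l; lra).
  assert (e' * (2 * (Rabs p + Rabs q + 1)) = eps) by (unfold e'; field; lra).
  nra.
Qed.

Lemma LimRight0_ext h g L : (forall t, 0 < t -> h t = g t) -> LimRight0 h L -> LimRight0 g L.
Proof.
  intros E H eps He. destruct (H eps He) as [dl [Hd P]]. exists dl; split; auto.
  intros t Ht. rewrite <- E by lra. auto.
Qed.

Lemma LimRight0_nonneg h L : LimRight0 h L -> (forall t, 0 < t -> 0 <= h t) -> 0 <= L.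
Proof.
  intros H Hp. apply Rnot_lt_le. intro Hl. destruct (H (- L) ltac:(lra)) as [dl [Hd P]].
  specialize (P (dl / 2) ltac:(lra)). specialize (Hp (dl / 2) ltac:(lra)).
  apply Rabs_def2 in P. lra.
Qed.

Lemma LimRight0_cauchy h : (forall eps, 0 < eps -> exists delta, 0 < delta /\
  forall s t, 0 < s < delta -> 0 < t < delta -> Rabs (h s - h t) < eps) -> exists L, LimRight0 h L.
Proof.
  intros H. set (u := fun n : nat => h (/ (INR n + 1))).
  assert (Hpos : forall n, 0 < / (INR n + 1)) by (intro n; apply Rinv_0_lt_compat; pose proof (pos_INR n); lra).
  assert (Hsmall : forall dl, 0 < dl -> exists N, forall n, (n >= N)%nat -> / (INR n + 1) < dl).
  { intros dl Hd. destruct (archimed (/ dl)) as [Hup _]. assert (0 < / dl) by (apply Rinv_0_lt_compat; auto).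
    exists (Z.to_nat (up (/ dl))). intros n Hn. apply le_INR in Hn. rewrite INR_IZR_INZ, Z2Nat.id in Hn by (apply le_IZR; lra).
    rewrite <- (Rinv_inv dl). apply Rinv_lt_contravar. apply Rmult_lt_0_compat; auto. pose proof (pos_INR n); lra. lra. }
  assert (Hc : Cauchy_crit u).
  { intros eps He. destruct (H eps He) as [dl [Hd P]]. destruct (Hsmall dl Hd) as [N HN].
    exists N. intros n m Hn Hm. unfold Rdist, u. apply P; split; auto. }
  destruct (Rcomplete.R_complete u Hc) as [L HL]. exists L.
  intros eps He. destruct (H (eps / 2) ltac:(lra)) as [dl [Hd P]]. exists dl; split; auto.
  intros t Ht. destruct (HL (eps / 2) ltac:(lra)) as [N1 HN1]. destruct (Hsmall dl Hd) as [N2 HN2].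
  set (n := Nat.max N1 N2). specialize (HN1 n ltac:(unfold n; lia)). specialize (HN2 n ltac:(unfold n; lia)).
  unfold Rdist, u in HN1. specialize (P t (/ (INR n + 1)) Ht ltac:(split; auto)).
  replace (h t - L) with ((h t - h (/ (INR n + 1))) + (h (/ (INR n + 1)) - L)) by ring.
  eapply Rle_lt_trans. apply Rabs_triang. lra.
Qed.

Lemma RD0 (Phi : R -> R) a b : a <= b -> (forall u, a <= u <= b -> ctn Phi u) ->
  (forall u, a <= u < b -> LimRight0 (fun t => (Phi (u + t) - Phi u) / t) 0) -> Phi b = Phi a.
Proof.
  intros Hab Hc Hd. apply NNPP; intro Hn.
  assert (Hbpos : a < b). { destruct Hab; auto. subst. contradiction. }
  set (eps := Rabs (Phi b - Phi a) / (2 * (b - a))).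
  assert (He : 0 < eps). { unfold eps. apply Rdiv_lt_0_compat. apply Rabs_pos_lt. lra. lra. }
  set (S := fun u => a <= u <= b /\ Rabs (Phi u - Phi a) <= eps * (u - a)).
  assert (HSb : bound S). { exists b. intros u [Hu _]; lra. }
  assert (HSa : exists x, S x). { exists a. split. lra. rewrite Rminus_diag, Rabs_R0. lra. }
  destruct (completeness S HSb HSa) as [c [Hub Hlub]].
  assert (Hac : a <= c). { apply Hub. split; [lra|]. rewrite Rminus_diag, Rabs_R0; lra. }
  assert (Hcb : c <= b) by (apply Hlub; intros u [Hu _]; lra).
  assert (HcS : Rabs (Phi c - Phi a) <= eps * (c - a)).
  { apply Rnot_lt_le. intro Hlt.
    set (g := Rabs (Phi c - Phi a) - eps * (c - a)).
    destruct (Hc c ltac:(lra) (g / 2) ltac:(unfold g; lra)) as [dl [Hdl P]].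
    assert (exists u, S u /\ c - dl < u <= c).
    { apply NNPP; intro Hno. assert (c <= c - dl).
      { apply Hlub. intros u Hu. apply Rnot_lt_le. intro Hlt2. apply Hno. exists u; split; [exact Hu | split; [exact Hlt2 | apply Hub; exact Hu]]. }
      lra. }
    destruct H as [u [[Hu1 Hu2] [Hu3 Hu4]]].
    specialize (P u ltac:(apply Rabs_def1; lra)).
    pose proof (Rabs_triang (Phi c - Phi u) (Phi u - Phi a)).
    replace (Phi c - Phi u + (Phi u - Phi a)) with (Phi c - Phi a) in H by ring.
    rewrite <- Rabs_Ropp in P. replace (- (Phi u - Phi c)) with (Phi c - Phi u) in P by ring.
    assert (eps * (u - a) <= eps * (c - a)) by (apply Rmult_le_compat_l; lra).
    unfold g in *. lra. }
  destruct (Req_dec c b).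
  - subst c. assert (Rabs (Phi b - Phi a) <= Rabs (Phi b - Phi a) / 2).
    { eapply Rle_trans. apply HcS. unfold eps. right. field. lra. }
    assert (0 < Rabs (Phi b - Phi a)) by (apply Rabs_pos_lt; lra). lra.
  - destruct (Hd c ltac:(lra) eps He) as [dl [Hdl P]].
    set (t := Rmin (dl / 2) ((b - c) / 2)).
    assert (Ht : 0 < t < dl) by (unfold t; split; [apply Rmin_pos; lra | pose proof (Rmin_l (dl/2) ((b-c)/2)); lra]).
    assert (Ht2 : t <= (b - c) / 2) by (unfold t; apply Rmin_r).
    specialize (P t Ht). rewrite Rminus_0_r in P.
    assert (Hq : Rabs (Phi (c + t) - Phi c) <= eps * t).
    { replace (Phi (c + t) - Phi c) with (t * ((Phi (c + t) - Phi c) / t)) by (field; lra).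
      rewrite Rabs_mult, Rabs_right by lra. rewrite Rmult_comm. apply Rmult_le_compat_r; lra. }
    assert (HS : S (c + t)).
    { split. split; lra.
      pose proof (Rabs_triang (Phi (c + t) - Phi c) (Phi c - Phi a)) as Htr.
      replace (Phi (c + t) - Phi c + (Phi c - Phi a)) with (Phi (c + t) - Phi a) in Htr by ring. nra. }
    specialize (Hub _ HS). lra.
Qed.

Section Ops.
Variable d : nat.
Variable theta : nat -> nat -> R.
Variable beta : R.
Variable r : nat -> R.
Hypothesis Hbeta : 0 < beta.

Definition phi (j : nat) (m : meas) (f : vec -> R) (t : R) : R :=
  exp (- (beta * t * r j)) * m (tr (rowvec theta j t) f).
Definition Aop j (m : meas) : meas := fun f => epsilon (inhabits 0) (fun L => ImpR (phi j m f) L).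
Definition Bop j t (m : meas) : meas := fun f => RI (phi j m f) 0 t.
Definition Dp j t (m : meas) : meas := Dop theta beta r j (fun _ => t) m.
Definition Gen j (X : meas) : meas :=
  fun f => epsilon (inhabits 0) (fun L => LimRight0 (fun t => / t * Dp j t X f) L).

Lemma Dop_phi j s m f : Dop theta beta r j s m f = m f - phi j m f (s j).
Proof. reflexivity. Qed.
Lemma Dp_phi j t m f : Dp j t m f = m f - phi j m f t.
Proof. reflexivity. Qed.
Lemma Dop_sj j s s' m : s j = s' j -> Dop theta beta r j s m = Dop theta beta r j s' m.
Proof. intros H. unfold Dop. rewrite H. reflexivity. Qed.

Definition thn j := sumR d (fun i => Rabs (theta j i)).
Lemma thn_bound j i : (i < d)%nat -> Rabs (theta j i) <= thn j.
Proof.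
  unfold thn. generalize d. intros n Hi. induction n; [lia|]. simpl.
  destruct (Nat.eq_dec i n). { subst i. assert (0 <= sumR n (fun i0 => Rabs (theta j i0))).
    { clear IHn Hi. induction n; simpl; [lra|]. pose proof (Rabs_pos (theta j n)); lra. } lra. }
  pose proof (Rabs_pos (theta j n)). specialize (IHn ltac:(lia)). lra.
Qed.
Lemma thn_pos j : 0 <= thn j.
Proof. unfold thn. generalize d. intro n. induction n; simpl; [lra|]. pose proof (Rabs_pos (theta j n)); lra. Qed.

Lemma rowvec_close j delta : 0 < delta -> exists eta, 0 < eta /\ forall u v : R, Rabs (u - v) < eta ->
  forall w : vec, forall i, (i < d)%nat -> Rabs (vadd (rowvec theta j u) w i - vadd (rowvec theta j v) w i) < delta.
Proof.
  intros Hd. exists (delta / (thn j + 1)). split. apply Rdiv_lt_0_compat; auto. pose proof (thn_pos j); lra.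
  intros u v Huv w i Hi. unfold vadd, rowvec.
  replace (u * theta j i + w i - (v * theta j i + w i)) with ((u - v) * theta j i) by ring.
  rewrite Rabs_mult. pose proof (thn_bound j i Hi). pose proof (thn_pos j).
  pose proof (Rabs_pos (u - v)). pose proof (Rabs_pos (theta j i)).
  assert (Rabs (u - v) * Rabs (theta j i) <= Rabs (u - v) * thn j) by (apply Rmult_le_compat_l; auto).
  assert (Rabs (u - v) * (thn j + 1) < delta).
  { apply (Rmult_lt_compat_r (thn j + 1)) in Huv; [|lra]. unfold Rdiv in Huv.
    rewrite Rmult_assoc, Rinv_l, Rmult_1_r in Huv by lra. auto. }
  nra.
Qed.

Lemma vadd_rowvec0 j w : vadd (rowvec theta j 0) w = w.
Proof. apply functional_extensionality; intro i; unfold vadd, rowvec; ring. Qed.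

Lemma exp_btr j t : exp (- (beta * t * r j)) = exp (- ((beta * r j) * t)).
Proof. f_equal. ring. Qed.

Lemma m_rowvec_ctn j m f w : IsMeasure d m -> Cper d f ->
  forall t, ctn (fun u => m (tr (vadd (rowvec theta j u) w) f)) t.
Proof.
  intros Hm Hf t eps He.
  assert (He' : 0 < eps / 2 / (mass m + 1)). { pose proof (mass_pos d m Hm). apply Rdiv_lt_0_compat; lra. }
  destruct (m_tr_UC d m f Hm Hf _ He') as [dl [Hdl P]].
  destruct (rowvec_close j dl Hdl) as [eta [Heta Q]].
  exists eta; split; auto. intros u Hu.
  eapply Rle_lt_trans. apply P. intros i Hi. apply Q; auto.
  pose proof (mass_pos d m Hm).
  assert (eps / 2 / (mass m + 1) * mass m <= eps / 2).
  { unfold Rdiv. rewrite Rmult_assoc. rewrite <- (Rmult_1_r (eps * / 2)) at 2. apply Rmult_le_compat_l. lra.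
    apply (Rmult_le_reg_l (mass m + 1)). lra. rewrite <- Rmult_assoc, Rinv_r by lra. lra. }
  lra.
Qed.

Lemma phi_cont j m f : IsMeasure d m -> Cper d f -> forall t, continuous (phi j m f) t.
Proof.
  intros Hm Hf t. unfold phi.
  apply (cont_mult_R (fun u => exp (- (beta * u * r j))) (fun u => m (tr (rowvec theta j u) f))).
  - replace (fun u => exp (- (beta * u * r j))) with (fun u => exp (- ((beta * r j) * u))).
    apply cont_exp_lin. apply functional_extensionality; intros; symmetry; apply exp_btr.
  - apply ctn_cont. pose proof (m_rowvec_ctn j m f (fun _ => 0) Hm Hf t).
    replace (fun u => m (tr (rowvec theta j u) f)) with (fun u => m (tr (vadd (rowvec theta j u) (fun _ => 0)) f)); auto.
    apply functional_extensionality; intro u. f_equal. f_equal. apply functional_extensionality; intro; unfold vadd; ring.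
Qed.

Lemma phi_bound j m f C : IsMeasure d m -> Cper d f -> (forall x, Rabs (f x) <= C) ->
  forall t, Rabs (phi j m f t) <= C * mass m * exp (- ((beta * r j) * t)).
Proof.
  intros Hm Hf HC t. unfold phi. rewrite Rabs_mult, Rabs_right by (apply Rle_ge; left; apply exp_pos).
  rewrite exp_btr. rewrite Rmult_comm. apply Rmult_le_compat_r. left; apply exp_pos.
  apply (m_bound d); auto. apply Cper_tr; auto. intros x; unfold tr; auto.
Qed.

Lemma phi_ImpR_ex j m f : 0 < r j -> IsMeasure d m -> Cper d f -> exists L, ImpR (phi j m f) L.
Proof.
  intros Hr Hm Hf. destruct (Cper_bounded d f Hf) as [C [HC0 HC]].
  apply (ImpR_exists _ (C * mass m) (beta * r j)). nra. apply phi_cont; auto.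
  intros t _. apply phi_bound; auto.
Qed.

Lemma A_spec j m f : 0 < r j -> IsMeasure d m -> Cper d f -> ImpR (phi j m f) (Aop j m f).
Proof. intros Hr Hm Hf. unfold Aop. apply epsilon_spec. apply phi_ImpR_ex; auto. Qed.

Lemma A_eq j m f L : ImpR (phi j m f) L -> Aop j m f = L.
Proof.
  intros H. unfold Aop. apply (ImpR_unique (phi j m f)); auto. apply epsilon_spec. eauto.
Qed.

Lemma phi_ext j m m' f : Cper d f -> (forall h, Cper d h -> m h = m' h) -> phi j m f = phi j m' f.
Proof.
  intros Hf H. apply functional_extensionality; intro t. unfold phi. rewrite H; auto. apply Cper_tr; auto.
Qed.

Lemma A_ext j m m' f : Cper d f -> (forall h, Cper d h -> m h = m' h) -> Aop j m f = Aop j m' f.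
Proof. intros Hf H. unfold Aop. rewrite (phi_ext j m m' f Hf H). reflexivity. Qed.

Lemma phi_lin j m a b f g : IsMeasure d m -> Cper d f -> Cper d g ->
  forall t, phi j m (fun x => a * f x + b * g x) t = a * phi j m f t + b * phi j m g t.
Proof.
  intros Hm Hf Hg t. unfold phi.
  change (tr (rowvec theta j t) (fun x => a * f x + b * g x)) with
    (fun x => a * tr (rowvec theta j t) f x + b * tr (rowvec theta j t) g x).
  rewrite (m_lin d m Hm); try apply Cper_tr; auto. ring.
Qed.

Lemma A_lin j m a b f g : 0 < r j -> IsMeasure d m -> Cper d f -> Cper d g ->
  Aop j m (fun x => a * f x + b * g x) = a * Aop j m f + b * Aop j m g.
Proof.
  intros Hr Hm Hf Hg. apply A_eq.
  eapply ImpR_ext; [|apply (ImpR_lin _ _ _ _ a b (A_spec j m f Hr Hm Hf) (A_spec j m g Hr Hm Hg))].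
  intros t. simpl. rewrite phi_lin; auto.
Qed.

Lemma phi_nonneg j m f t : IsMeasure d m -> Cper d f -> (forall x, 0 <= f x) -> 0 <= phi j m f t.
Proof.
  intros Hm Hf Hp. unfold phi. apply Rmult_le_pos. left; apply exp_pos.
  apply (m_pos d); auto. apply Cper_tr; auto. intros; unfold tr; auto.
Qed.

Lemma A_IsMeasure j m : 0 < r j -> IsMeasure d m -> IsMeasure d (Aop j m).
Proof.
  intros Hr Hm. split; [|split].
  - intros f g Hf Hg. rewrite <- (m_ext _ (fun x => 1 * f x + 1 * g x)) by (intros; ring).
    rewrite A_lin; auto. ring.
  - intros a f Hf. rewrite <- (m_ext _ (fun x => a * f x + 0 * f x)) by (intros; ring).
    rewrite A_lin; auto. ring.
  - intros f Hf Hp.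
    assert (H := ImpR_le (fun t => 0 * phi j m f t) (phi j m f) (0 * Aop j m f) (Aop j m f)
      (ImpR_scal _ _ 0 (A_spec j m f Hr Hm Hf)) (A_spec j m f Hr Hm Hf)).
    rewrite Rmult_0_l in H. apply H. intros t _. rewrite Rmult_0_l. apply phi_nonneg; auto.
Qed.

Lemma A_mass j m : 0 < r j -> IsMeasure d m -> mass (Aop j m) = mass m * / (beta * r j).
Proof.
  intros Hr Hm. unfold mass. apply A_eq.
  eapply ImpR_ext; [|apply (ImpR_scal (fun t => exp (- ((beta * r j) * t))) (/ (beta * r j)) (m (fun _ => 1)) (ImpR_exp (beta * r j) ltac:(nra)))].
  intros t. simpl. unfold phi. rewrite exp_btr. change (tr (rowvec theta j t) (fun _ => 1)) with (fun _ : vec => 1). ring.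
Qed.

Lemma B_IsMeasure j t m : 0 <= t -> IsMeasure d m -> IsMeasure d (Bop j t m).
Proof.
  intros Ht Hm.
  assert (Hex : forall f, Cper d f -> ex_RInt (phi j m f) 0 t).
  { intros; apply ex_RInt_cont; apply phi_cont; auto. }
  assert (Hlin : forall a b f g, Cper d f -> Cper d g ->
    Bop j t m (fun x => a * f x + b * g x) = a * Bop j t m f + b * Bop j t m g).
  { intros a b f g Hf Hg. unfold Bop. rewrite <- RI_lin by auto. apply RI_ext. intros; apply phi_lin; auto. }
  split; [|split].
  - intros f g Hf Hg. rewrite <- (m_ext _ (fun x => 1 * f x + 1 * g x)) by (intros; ring).
    rewrite Hlin; auto. ring.
  - intros a f Hf. rewrite <- (m_ext _ (fun x => a * f x + 0 * f x)) by (intros; ring).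
    rewrite Hlin; auto. ring.
  - intros f Hf Hp. unfold Bop. apply RI_ge0; auto. intros; apply phi_nonneg; auto.
Qed.

Lemma phi_tr j m f t u : phi j m (tr (rowvec theta j t) f) u = exp (beta * t * r j) * phi j m f (u + t).
Proof.
  unfold phi. rewrite tr_tr, rowvec_add.
  replace (exp (- (beta * u * r j))) with (exp (beta * t * r j) * exp (- (beta * (u + t) * r j))).
  ring. rewrite <- exp_plus. f_equal. ring.
Qed.

Lemma DA_B j t m f : 0 < r j -> 0 <= t -> IsMeasure d m -> Cper d f ->
  Dp j t (Aop j m) f = Bop j t m f.
Proof.
  intros Hr Ht Hm Hf. rewrite Dp_phi. unfold phi at 1.
  change (Aop j m (tr (rowvec theta j t) f)) with (Aop j m (tr (rowvec theta j t) f)).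
  assert (E : Aop j m (tr (rowvec theta j t) f) = exp (beta * t * r j) * (Aop j m f - RI (phi j m f) 0 t)).
  { apply A_eq. eapply ImpR_ext; [| apply ImpR_scal, ImpR_shift; auto].
    - intros u. simpl. rewrite phi_tr. reflexivity.
    - apply phi_cont; auto.
    - apply A_spec; auto. }
  rewrite E. unfold Bop.
  replace (exp (- (beta * t * r j)) * (exp (beta * t * r j) * (Aop j m f - RI (phi j m f) 0 t)))
    with ((exp (- (beta * t * r j)) * exp (beta * t * r j)) * (Aop j m f - RI (phi j m f) 0 t)) by ring.
  rewrite <- exp_plus. replace (- (beta * t * r j) + beta * t * r j) with 0 by ring. rewrite exp_0. ring.
Qed.

Lemma DA_comm j i s Y f : 0 < r j -> IsMeasure d Y -> Cper d f ->
  Aop j (Dop theta beta r i s Y) f = Dop theta beta r i s (Aop j Y) f.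
Proof.
  intros Hr HY Hf. rewrite Dop_phi. unfold phi.
  replace (Aop j Y f - exp (- (beta * s i * r i)) * Aop j Y (tr (rowvec theta i (s i)) f)) with
    (1 * Aop j Y f + (- exp (- (beta * s i * r i))) * Aop j Y (tr (rowvec theta i (s i)) f)) by ring.
  apply A_eq.
  eapply ImpR_ext; [|apply (ImpR_lin _ _ _ _ 1 (- exp (- (beta * s i * r i))) (A_spec j Y f Hr HY Hf) (A_spec j Y (tr (rowvec theta i (s i)) f) Hr HY (Cper_tr d _ f Hf)))].
  intros u. simpl. unfold phi. rewrite Dop_phi. unfold phi. rewrite tr_comm. ring.
Qed.


Lemma DA_ImpR j i s Y f : 0 < r j -> IsMeasure d Y -> Cper d f ->
  ImpR (phi j (Dop theta beta r i s Y) f) (Dop theta beta r i s (Aop j Y) f).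
Proof.
  intros Hr HY Hf. rewrite <- DA_comm by auto. unfold Aop. apply epsilon_spec.
  exists (Dop theta beta r i s (Aop j Y) f). rewrite Dop_phi. unfold phi at 2.
  replace (Aop j Y f - exp (- (beta * s i * r i)) * Aop j Y (tr (rowvec theta i (s i)) f)) with
    (1 * Aop j Y f + (- exp (- (beta * s i * r i))) * Aop j Y (tr (rowvec theta i (s i)) f)) by ring.
  eapply ImpR_ext; [|apply (ImpR_lin _ _ _ _ 1 (- exp (- (beta * s i * r i))) (A_spec j Y f Hr HY Hf) (A_spec j Y (tr (rowvec theta i (s i)) f) Hr HY (Cper_tr d _ f Hf)))].
  intros u. simpl. unfold phi. rewrite Dop_phi. unfold phi. rewrite tr_comm. ring.
Qed.

Lemma phi_near j W f : 0 < r j -> IsMeasure d W -> Cper d f -> forall eta, 0 < eta -> exists delta, 0 < delta /\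
  forall u, 0 <= u < delta -> forall v, Rabs (phi j W (tr v f) u - W (tr v f)) <= eta.
Proof.
  intros Hr HW Hf eta He. destruct (Cper_bounded d f Hf) as [C [HC0 HC]].
  set (M := mass W). assert (HM : 0 <= M) by (apply (mass_pos d); auto).
  set (e1 := eta / (2 * (M + 1))). assert (He1 : 0 < e1) by (unfold e1; apply Rdiv_lt_0_compat; lra).
  destruct (m_tr_UC d W f HW Hf e1 He1) as [d1 [Hd1 P1]].
  destruct (rowvec_close j d1 Hd1) as [eta1 [Heta1 Q1]].
  set (K := beta * r j * C * M + 1). assert (HK : 0 < K).
  { unfold K. assert (0 <= beta * r j * C * M) by (repeat apply Rmult_le_pos; lra). lra. }
  exists (Rmin eta1 (eta / (2 * K))). split. { apply Rmin_pos; auto. apply Rdiv_lt_0_compat; lra. }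
  intros u [Hu0 Hu1] v.
  assert (Hu2 : u < eta1) by (pose proof (Rmin_l eta1 (eta / (2 * K))); lra).
  assert (Hu3 : u < eta / (2 * K)) by (pose proof (Rmin_r eta1 (eta / (2 * K))); lra).
  unfold phi. rewrite tr_tr.
  replace (W (tr v f)) with (W (tr (vadd (rowvec theta j 0) v) f)) by (rewrite vadd_rowvec0; auto).
  set (A := W (tr (vadd (rowvec theta j u) v) f)). set (B := W (tr (vadd (rowvec theta j 0) v) f)).
  set (e := exp (- (beta * u * r j))).
  assert (HAB : Rabs (A - B) <= e1 * M).
  { apply P1. intros i Hi. apply Q1; auto. rewrite Rminus_0_r, Rabs_right; lra. }
  assert (HB : Rabs B <= C * M).
  { unfold B. apply (m_bound d); auto. apply Cper_tr; auto. intros; unfold tr; auto. }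
  assert (He0 : 0 <= 1 - e <= beta * r j * u).
  { unfold e. pose proof (one_minus_exp (beta * u * r j) ltac:(apply Rmult_le_pos; [apply Rmult_le_pos|]; lra)).
    replace (beta * r j * u) with (beta * u * r j) by ring. lra. }
  assert (Hepos : 0 < e) by apply exp_pos.
  replace (e * A - B) with (e * (A - B) - (1 - e) * B) by ring.
  eapply Rle_trans. apply Rabs_triang. rewrite Rabs_Ropp, !Rabs_mult, (Rabs_right e), (Rabs_right (1 - e)) by lra.
  assert (e * Rabs (A - B) <= e1 * M).
  { apply Rle_trans with (1 * Rabs (A - B)). apply Rmult_le_compat_r. apply Rabs_pos. lra. lra. }
  assert ((1 - e) * Rabs B <= beta * r j * u * (C * M)).
  { apply Rmult_le_compat; try lra; apply Rabs_pos. }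
  assert (e1 * M <= eta / 2).
  { unfold e1. apply Rle_trans with (eta / (2 * (M + 1)) * (M + 1)).
    apply Rmult_le_compat_l; [left; apply Rdiv_lt_0_compat; lra | lra]. right; field; lra. }
  assert (beta * r j * u * (C * M) <= eta / 2).
  { assert (Hk : beta * r j * C * M <= K) by (unfold K; lra).
    assert (0 <= beta * r j * C * M) by (repeat apply Rmult_le_pos; lra).
    apply Rle_trans with (u * K). nra.
    apply (Rmult_lt_compat_r K) in Hu3; auto. unfold Rdiv in Hu3. rewrite Rinv_mult in Hu3.
    replace (eta * (/ 2 * / K) * K) with (eta / 2) in Hu3 by (field; lra). lra. }
  lra.
Qed.

Lemma III j W f : 0 < r j -> IsMeasure d W -> Cper d f -> forall eta, 0 < eta -> exists delta, 0 < delta /\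
  forall t, 0 < t < delta -> forall v, Rabs (/ t * Bop j t W (tr v f) - W (tr v f)) <= eta.
Proof.
  intros Hr HW Hf eta He. destruct (phi_near j W f Hr HW Hf eta He) as [dl [Hdl P]].
  exists dl; split; auto. intros t Ht v. unfold Bop.
  assert (Hex : ex_RInt (phi j W (tr v f)) 0 t) by (apply ex_RInt_cont; apply phi_cont; auto; apply Cper_tr; auto).
  assert (Hc : ex_RInt (fun _ : R => 1) 0 t) by (apply ex_RInt_cont; intros; apply continuous_const).
  replace (/ t * RI (phi j W (tr v f)) 0 t - W (tr v f)) with
    (/ t * RI (fun u => 1 * phi j W (tr v f) u + (- W (tr v f)) * 1) 0 t).
  2:{ rewrite RI_lin by auto. rewrite RI_const. field. lra. }
  rewrite Rabs_mult, Rabs_right by (apply Rle_ge; left; apply Rinv_0_lt_compat; lra).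
  apply Rle_trans with (/ t * ((t - 0) * eta)).
  - apply Rmult_le_compat_l. left; apply Rinv_0_lt_compat; lra.
    apply RI_abs_le_const. lra. apply ex_RInt_lin_R; auto.
    intros u Hu. replace (1 * phi j W (tr v f) u + - W (tr v f) * 1) with (phi j W (tr v f) u - W (tr v f)) by ring.
    apply P. lra.
  - right. field. lra.
Qed.

Lemma Gen_eq j X f L : LimRight0 (fun t => / t * Dp j t X f) L -> Gen j X f = L.
Proof.
  intros H. unfold Gen. apply (LimRight0_unique (fun t => / t * Dp j t X f)); auto.
  apply epsilon_spec. eauto.
Qed.

Lemma Gen_ext j X X' f : Cper d f -> (forall h, Cper d h -> X h = X' h) -> Gen j X f = Gen j X' f.
Proof.
  intros Hf H. unfold Gen. f_equal. apply functional_extensionality; intro L.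
  f_equal. apply functional_extensionality; intro t. rewrite !Dp_phi. unfold phi. rewrite !H; auto. apply Cper_tr; auto.
Qed.

Lemma tr_zero (f : vec -> R) : tr (fun _ => 0) f = f.
Proof. apply functional_extensionality; intro x. unfold tr. f_equal. apply functional_extensionality; intro; unfold vadd; ring. Qed.

Lemma Gen_A j W f : 0 < r j -> IsMeasure d W -> Cper d f -> Gen j (Aop j W) f = W f.
Proof.
  intros Hr HW Hf. apply Gen_eq. intros eps He.
  destruct (III j W f Hr HW Hf (eps / 2) ltac:(lra)) as [dl [Hdl P]]. exists dl; split; auto.
  intros t Ht. rewrite DA_B by (auto; lra). specialize (P t Ht (fun _ => 0)). rewrite tr_zero in P. lra.
Qed.

Lemma Gen_AA j i W f : 0 < r j -> 0 < r i -> IsMeasure d W -> Cper d f ->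
  Gen j (Aop i (Aop j W)) f = Aop i W f.
Proof.
  intros Hrj Hri HW Hf. apply Gen_eq. intros eps He.
  set (Z := Aop j W). assert (HZ : IsMeasure d Z) by (apply A_IsMeasure; auto).
  assert (Hbr : 0 < beta * r i) by (apply Rmult_lt_0_compat; lra).
  set (eta := eps * (beta * r i) / 2). assert (Heta : 0 < eta) by (unfold eta; apply Rdiv_lt_0_compat; [apply Rmult_lt_0_compat|]; lra).
  destruct (III j W f Hrj HW Hf eta Heta) as [dl [Hdl P]]. exists dl; split; auto.
  intros t Ht.
  assert (I1 := DA_ImpR i j (fun _ => t) Z f Hri HZ Hf). fold (Dp j t (Aop i Z)) in I1. fold (Dp j t Z) in I1.
  assert (I2 := A_spec i W f Hri HW Hf).
  assert (I3 := ImpR_lin _ _ _ _ (/ t) (-1) I1 I2).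
  assert (I4 := ImpR_scal _ _ eta (ImpR_exp (beta * r i) Hbr)).
  assert (Hle := ImpR_abs_le _ _ _ _ I3 I4).
  replace (/ t * Dp j t (Aop i Z) f - Aop i W f) with (/ t * Dp j t (Aop i Z) f + -1 * Aop i W f) by ring.
  eapply Rle_lt_trans. apply Hle.
  - intros u Hu. unfold phi. rewrite (DA_B j t W) by (auto; try lra; apply Cper_tr; auto).
    rewrite <- exp_btr.
    replace (/ t * (exp (- (beta * u * r i)) * Bop j t W (tr (rowvec theta i u) f)) +
      -1 * (exp (- (beta * u * r i)) * W (tr (rowvec theta i u) f))) with
      (exp (- (beta * u * r i)) * (/ t * Bop j t W (tr (rowvec theta i u) f) - W (tr (rowvec theta i u) f))) by ring.
    rewrite Rabs_mult, Rabs_right by (apply Rle_ge; left; apply exp_pos).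
    rewrite Rmult_comm. apply Rmult_le_compat_r. left; apply exp_pos. apply P; auto.
  - unfold eta. replace (eps * (beta * r i) / 2 * / (beta * r i)) with (eps / 2) by (field; lra). lra.
Qed.

End Ops.

Lemma RI_deriv (h : R -> R) u : (forall t, continuous h t) ->
  derivable_pt_lim (fun v => RI h 0 v) u (h u).
Proof.
  intros Hc. apply is_derive_Reals.
  apply (is_derive_RInt (V:=R_CompleteNormedModule) h (fun v => RInt h 0 v) 0 u).
  - apply filter_forall. intros b. apply (RInt_correct (V:=R_CompleteNormedModule)). apply ex_RInt_cont; auto.
  - auto.
Qed.

Lemma deriv_ctn (F : R -> R) u l : derivable_pt_lim F u l -> ctn F u.
Proof.
  intros H. apply cont_ctn. apply (ex_derive_continuous (K:=R_AbsRing) (V:=R_NormedModule)).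
  exists l. apply is_derive_Reals. auto.
Qed.

Lemma deriv_right (F : R -> R) u l : derivable_pt_lim F u l -> LimRight0 (fun t => (F (u + t) - F u) / t) l.
Proof.
  intros H eps He. destruct (H eps He) as [dl Hdl]. exists dl. split. apply cond_pos.
  intros t Ht. apply Hdl. lra. rewrite Rabs_right; lra.
Qed.

Lemma exp_lim c : LimRight0 (fun t => (1 - exp (- (c * t))) / t) c.
Proof.
  intros eps He. destruct (Req_dec c 0).
  - subst. exists 1. split; [lra|]. intros t Ht. rewrite Rmult_0_l, Ropp_0, exp_0.
    replace ((1 - 1) / t - 0) with 0 by (field; lra). rewrite Rabs_R0; auto.
  - assert (Hc : 0 < Rabs c) by (apply Rabs_pos_lt; auto).
    destruct (derivable_pt_lim_exp_0 (eps / Rabs c) ltac:(apply Rdiv_lt_0_compat; lra)) as [dl Hdl].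
    exists (dl / Rabs c). split. apply Rdiv_lt_0_compat; auto. apply cond_pos.
    intros t Ht. specialize (Hdl (- (c * t))).
    assert (Hh : - (c * t) <> 0). { intro Hz. assert (c * t = 0) by lra. apply Rmult_integral in H0. destruct H0; lra. }
    assert (Hh2 : Rabs (- (c * t)) < dl).
    { rewrite Rabs_Ropp, Rabs_mult, (Rabs_right t) by lra.
      destruct Ht as [Ht1 Ht2]. apply (Rmult_lt_compat_l (Rabs c)) in Ht2; auto.
      replace (Rabs c * (dl / Rabs c)) with (pos dl) in Ht2 by (field; lra). lra. }
    specialize (Hdl Hh Hh2). rewrite Rplus_0_l, exp_0 in Hdl.
    replace ((1 - exp (- (c * t))) / t - c) with (c * ((exp (- (c * t)) - 1) / - (c * t) - 1)) by (field; lra).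
    rewrite Rabs_mult. apply (Rmult_lt_compat_l (Rabs c)) in Hdl; auto.
    replace (Rabs c * (eps / Rabs c)) with eps in Hdl by (field; lra). auto.
Qed.

Section OneDim.
Variable d : nat.
Variable theta : nat -> nat -> R.
Variable beta : R.
Variable r : nat -> R.
Hypothesis Hbeta : 0 < beta.
Variable j : nat.
Hypothesis Hr : 0 < r j.

Definition gp (f : vec -> R) (x : vec) (u : R) : R := f (vadd x (rowvec theta j u)).
Definition avg (e : R) (f : vec -> R) : vec -> R := fun x => / e * RI (gp f x) 0 e.

Lemma rowvec_close0 delta : 0 < delta -> exists eta, 0 < eta /\ forall u v : R, Rabs (u - v) < eta ->
  forall i, (i < d)%nat -> Rabs (rowvec theta j u i - rowvec theta j v i) < delta.
Proof.
  intros Hd. destruct (rowvec_close d theta j delta Hd) as [eta [He P]]. exists eta; split; auto.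
  intros u v Huv i Hi. specialize (P u v Huv (fun _ => 0) i Hi). unfold vadd in P.
  rewrite !Rplus_0_r in P. auto.
Qed.

Lemma gp_uc f : Cper d f -> forall eta, 0 < eta -> exists delta, 0 < delta /\
  forall x u v, Rabs (u - v) < delta -> Rabs (gp f x u - gp f x v) < eta.
Proof.
  intros Hf eta He. destruct (tr_UC d f Hf eta He) as [d1 [Hd1 P]].
  destruct (rowvec_close0 d1 Hd1) as [d2 [Hd2 Q]]. exists d2; split; auto.
  intros x u v Huv. unfold gp. apply (P (rowvec theta j u) (rowvec theta j v)). intros; apply Q; auto.
Qed.

Lemma gp_cont f x : Cper d f -> forall t, continuous (gp f x) t.
Proof.
  intros Hf t. apply ctn_cont. intros eps He. destruct (gp_uc f Hf eps He) as [dl [Hd P]].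
  exists dl; split; auto.
Qed.

Lemma gp_ex f x a b : Cper d f -> ex_RInt (gp f x) a b.
Proof. intros; apply ex_RInt_cont; apply gp_cont; auto. Qed.

Lemma avg_piece f : Cper d f -> forall eta, 0 < eta -> exists delta, 0 < delta /\
  forall x a t, 0 < t < delta -> Rabs (/ t * RI (gp f x) a (a + t) - gp f x a) <= eta.
Proof.
  intros Hf eta He. destruct (gp_uc f Hf eta He) as [dl [Hd P]]. exists dl; split; auto.
  intros x a t Ht.
  assert (Hc : ex_RInt (fun _ : R => 1) a (a + t)) by (apply ex_RInt_cont; intros; apply continuous_const).
  replace (/ t * RI (gp f x) a (a + t) - gp f x a) with
    (/ t * RI (fun u => 1 * gp f x u + (- gp f x a) * 1) a (a + t)).
  2:{ rewrite RI_lin by (auto; apply gp_ex; auto). rewrite RI_const. field. lra. }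
  rewrite Rabs_mult, Rabs_right by (apply Rle_ge; left; apply Rinv_0_lt_compat; lra).
  apply Rle_trans with (/ t * ((a + t - a) * eta)).
  - apply Rmult_le_compat_l. left; apply Rinv_0_lt_compat; lra.
    apply RI_abs_le_const. lra. apply ex_RInt_lin_R; auto; apply gp_ex; auto.
    intros u Hu. replace (1 * gp f x u + - gp f x a * 1) with (gp f x u - gp f x a) by ring.
    left. apply P. rewrite Rabs_right; lra.
  - right. field. lra.
Qed.

Lemma avg_Cper e f : 0 < e -> Cper d f -> Cper d (avg e f).
Proof.
  intros He Hf. pose proof Hf as [F1 [F2 F3]]. unfold avg. split; [|split].
  - intros x y Hxy. f_equal. apply RI_ext. intros u _. unfold gp. apply F1.
    intros i Hi. unfold vadd. rewrite Hxy; auto.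
  - intros x i Hi. f_equal. apply RI_ext. intros u _. unfold gp. rewrite vadd_upd. apply F2; auto.
  - intros x eps Heps. destruct (Cper_UC d f Hf (eps / 2) ltac:(lra)) as [dl [Hdl P]].
    exists dl; split; auto. intros y Hy.
    rewrite <- Rmult_minus_distr_l.
    replace (RI (gp f y) 0 e - RI (gp f x) 0 e) with (RI (fun u => 1 * gp f y u + (-1) * gp f x u) 0 e)
      by (rewrite RI_lin by (apply gp_ex; auto); ring).
    rewrite Rabs_mult, Rabs_right by (apply Rle_ge; left; apply Rinv_0_lt_compat; lra).
    apply Rle_lt_trans with (/ e * ((e - 0) * (eps / 2))).
    + apply Rmult_le_compat_l. left; apply Rinv_0_lt_compat; lra.
      apply RI_abs_le_const. lra. apply ex_RInt_lin_R; apply gp_ex; auto.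
      intros u Hu. replace (1 * gp f y u + -1 * gp f x u) with (gp f y u - gp f x u) by ring.
      left. unfold gp. apply P. intros i Hi. unfold vadd.
      replace (y i + rowvec theta j u i - (x i + rowvec theta j u i)) with (y i - x i) by ring. auto.
    + replace (/ e * ((e - 0) * (eps / 2))) with (eps / 2) by (field; lra). lra.
Qed.

Lemma avg_close f : Cper d f -> forall eta, 0 < eta -> exists e0, 0 < e0 /\
  forall e, 0 < e < e0 -> forall x, Rabs (avg e f x - f x) <= eta.
Proof.
  intros Hf eta He. destruct (avg_piece f Hf eta He) as [dl [Hd P]]. exists dl; split; auto.
  intros e Hee x. specialize (P x 0 e Hee). unfold avg. rewrite Rplus_0_l in P.
  replace (f x) with (gp f x 0); auto. unfold gp. f_equal. apply functional_extensionality; intro; unfold vadd, rowvec; ring.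
Qed.

Lemma avg_bound e f C : 0 < e -> Cper d f -> (forall x, Rabs (f x) <= C) -> forall x, Rabs (avg e f x) <= C.
Proof.
  intros He Hf HC x. unfold avg. rewrite Rabs_mult, Rabs_right by (apply Rle_ge; left; apply Rinv_0_lt_compat; lra).
  apply Rle_trans with (/ e * ((e - 0) * C)).
  - apply Rmult_le_compat_l. left; apply Rinv_0_lt_compat; lra.
    apply RI_abs_le_const. lra. apply gp_ex; auto. intros; unfold gp; auto.
  - right; field; lra.
Qed.

Lemma gp_shift f x t u : gp f (vadd x (rowvec theta j t)) u = gp f x (u + t).
Proof. unfold gp. rewrite vadd_assoc, rowvec_add. f_equal. f_equal. f_equal. ring. Qed.

Lemma avg_shift e f x t : Cper d f -> avg e f (vadd x (rowvec theta j t)) = / e * RI (gp f x) t (e + t).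
Proof.
  intros Hf. unfold avg. f_equal. rewrite (RI_ext _ (fun u => gp f x (u + t))) by (intros; apply gp_shift).
  rewrite RI_shift. f_equal; ring. apply gp_cont; auto.
Qed.


Definition qe (e : R) (f : vec -> R) : vec -> R :=
  fun x => beta * r j * avg e f x + / e * (f x - f (vadd x (rowvec theta j e))).

Lemma qe_Cper e f : 0 < e -> Cper d f -> Cper d (qe e f).
Proof.
  intros He Hf. unfold qe. apply Cper_lin. apply avg_Cper; auto.
  apply Cper_minus; auto. apply (Cper_tr d (rowvec theta j e) f Hf).
Qed.

Lemma qe_unif e f : 0 < e -> Cper d f -> forall eta, 0 < eta -> exists delta, 0 < delta /\
  forall t, 0 < t < delta -> forall x,
    Rabs (/ t * (avg e f x - exp (- (beta * t * r j)) * avg e f (vadd x (rowvec theta j t))) - qe e f x) <= eta.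
Proof.
  intros He Hf eta Heta. destruct (Cper_bounded d f Hf) as [C [HC0 HC]].
  assert (Hbr : 0 < beta * r j) by (apply Rmult_lt_0_compat; lra).
  set (eta1 := Rmin (eta * e / 6) (eta / (3 * (C + 1)))).
  assert (He1 : 0 < eta1). { unfold eta1. apply Rmin_pos; apply Rdiv_lt_0_compat; nra. }
  destruct (avg_piece f Hf eta1 He1) as [d1 [Hd1 P1]].
  destruct (exp_lim (beta * r j) eta1 He1) as [d3 [Hd3 P3]].
  set (d4 := eta * e / (6 * (beta * r j * C + 1))).
  assert (Hd4 : 0 < d4). { unfold d4. apply Rdiv_lt_0_compat. nra. assert (0 <= beta * r j * C) by nra. lra. }
  exists (Rmin d1 (Rmin d3 d4)). split. { apply Rmin_pos; auto. apply Rmin_pos; auto. }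
  intros t Ht x.
  assert (Ht1 : 0 < t < d1) by (pose proof (Rmin_l d1 (Rmin d3 d4)); lra).
  assert (Ht3 : 0 < t < d3) by (pose proof (Rmin_r d1 (Rmin d3 d4)); pose proof (Rmin_l d3 d4); lra).
  assert (Ht4 : t < d4) by (pose proof (Rmin_r d1 (Rmin d3 d4)); pose proof (Rmin_r d3 d4); lra).
  rewrite avg_shift by auto. unfold qe, avg.
  set (I := fun a b => RI (gp f x) a b).
  assert (Ch : I 0 e - I t (e + t) = I 0 t - I e (e + t)).
  { unfold I. rewrite <- (RI_Chasles (gp f x) 0 t e), <- (RI_Chasles (gp f x) t e (e + t)) by (apply gp_ex; auto). ring. }
  assert (Q1 : Rabs (/ t * I 0 t - f x) <= eta1).
  { specialize (P1 x 0 t Ht1). rewrite Rplus_0_l in P1. unfold I. replace (f x) with (gp f x 0); auto.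
    unfold gp. f_equal. apply functional_extensionality; intro; unfold vadd, rowvec; ring. }
  assert (Q2 : Rabs (/ t * I e (e + t) - f (vadd x (rowvec theta j e))) <= eta1).
  { specialize (P1 x e t Ht1). unfold I. auto. }
  assert (Q3 : Rabs ((1 - exp (- (beta * r j * t))) / t - beta * r j) <= eta1).
  { left. apply P3; auto. }
  assert (Q4 : forall a, Rabs (I a (a + t)) <= t * C).
  { intros a. unfold I. replace (t * C) with ((a + t - a) * C) by ring. apply RI_abs_le_const. lra. apply gp_ex; auto.
    intros; unfold gp; auto. }
  assert (Q5 : Rabs (/ e * I t (e + t)) <= C).
  { rewrite Rabs_mult, Rabs_right by (apply Rle_ge; left; apply Rinv_0_lt_compat; lra).
    apply Rle_trans with (/ e * ((e + t - t) * C)). apply Rmult_le_compat_l. left; apply Rinv_0_lt_compat; lra.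
    unfold I. apply RI_abs_le_const. lra. apply gp_ex; auto. intros; unfold gp; auto. right; field; lra. }
  rewrite exp_btr.
  set (ct := exp (- (beta * r j * t))). set (G0 := / e * I 0 e). set (Gt := / e * I t (e + t)).
  assert (Hdiff : Rabs (Gt - G0) <= 2 * t * C / e).
  { unfold Gt, G0. replace (/ e * I t (e + t) - / e * I 0 e) with (- / e * (I 0 e - I t (e + t))) by ring.
    assert (Q4a : Rabs (I 0 t) <= t * C) by (replace (I 0 t) with (I 0 (0 + t)) by (f_equal; ring); apply Q4).
    assert (Q4b := Q4 e).
    rewrite Ch, Rabs_mult, Rabs_Ropp, Rabs_right by (apply Rle_ge; left; apply Rinv_0_lt_compat; lra).
    apply Rle_trans with (/ e * (t * C + t * C)). apply Rmult_le_compat_l. left; apply Rinv_0_lt_compat; lra.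
    eapply Rle_trans; [apply Rabs_triang|]. rewrite Rabs_Ropp. lra.
    right. field. lra. }
  replace (/ t * (G0 - ct * Gt) - (beta * r j * G0 + / e * (f x - f (vadd x (rowvec theta j e)))))
    with (/ e * ((/ t * I 0 t - f x) - (/ t * I e (e + t) - f (vadd x (rowvec theta j e))))
          + ((1 - ct) / t - beta * r j) * Gt + beta * r j * (Gt - G0)).
  2:{ unfold G0, Gt. replace (I 0 e) with (I 0 t - I e (e + t) + I t (e + t)) by lra.
      field; repeat split; lra. }
  assert (A1 : Rabs (/ e * ((/ t * I 0 t - f x) - (/ t * I e (e + t) - f (vadd x (rowvec theta j e))))) <= eta / 3).
  { rewrite Rabs_mult, Rabs_right by (apply Rle_ge; left; apply Rinv_0_lt_compat; lra).
    apply Rle_trans with (/ e * (2 * eta1)).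
    apply Rmult_le_compat_l. left; apply Rinv_0_lt_compat; lra.
    eapply Rle_trans. apply Rabs_triang. rewrite Rabs_Ropp. lra.
    assert (eta1 <= eta * e / 6) by apply Rmin_l.
    apply Rle_trans with (/ e * (2 * (eta * e / 6))). apply Rmult_le_compat_l. left; apply Rinv_0_lt_compat; lra. lra.
    right. field. lra. }
  assert (A2 : Rabs (((1 - ct) / t - beta * r j) * Gt) <= eta / 3).
  { rewrite Rabs_mult. apply Rle_trans with (eta1 * C). apply Rmult_le_compat; auto; apply Rabs_pos.
    assert (eta1 <= eta / (3 * (C + 1))) by apply Rmin_r.
    apply Rle_trans with (eta / (3 * (C + 1)) * C). apply Rmult_le_compat_r; auto.
    apply Rle_trans with (eta / (3 * (C + 1)) * (C + 1)). apply Rmult_le_compat_l. left; apply Rdiv_lt_0_compat; lra. lra.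
    right. field. lra. }
  assert (A3 : Rabs (beta * r j * (Gt - G0)) <= eta / 3).
  { rewrite Rabs_mult, Rabs_right by lra. apply Rle_trans with (beta * r j * (2 * t * C / e)).
    apply Rmult_le_compat_l; lra.
    assert (t * (6 * (beta * r j * C + 1)) <= eta * e).
    { unfold d4 in Ht4. apply (Rmult_lt_compat_r (6 * (beta * r j * C + 1))) in Ht4. 
      replace (eta * e / (6 * (beta * r j * C + 1)) * (6 * (beta * r j * C + 1))) with (eta * e) in Ht4 by (field; nra). lra. nra. }
    apply (Rmult_le_reg_r e). lra. replace (beta * r j * (2 * t * C / e) * e) with (2 * beta * r j * C * t) by (field; lra).
    nra. }
  eapply Rle_trans. apply Rabs_triang. eapply Rle_trans. apply Rplus_le_compat_r. apply Rabs_triang. lra.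
Qed.


Definition mu (t : R) (X : meas) : meas := fun h => / t * Dp theta beta r j t X h.
Definition JSub (X : meas) := IsMeasure d X /\ forall t, 0 <= t -> PosFun d (Dp theta beta r j t X).

Lemma Dp_lin X a b f g : IsMeasure d X -> Cper d f -> Cper d g -> forall t,
  Dp theta beta r j t X (fun x => a * f x + b * g x) = a * Dp theta beta r j t X f + b * Dp theta beta r j t X g.
Proof.
  intros HX Hf Hg t. rewrite !Dp_phi. rewrite (phi_lin d theta beta r j X a b f g HX Hf Hg).
  rewrite (m_lin d X HX); auto. ring.
Qed.

Lemma mu_IsMeasure X t : JSub X -> 0 < t -> IsMeasure d (mu t X).
Proof.
  intros [HX HP] Ht. unfold mu. split; [|split].
  - intros f g Hf Hg. rewrite <- (m_ext _ (fun x => 1 * f x + 1 * g x)) by (intros; ring).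
    rewrite Dp_lin; auto. ring.
  - intros a f Hf. rewrite <- (m_ext _ (fun x => a * f x + 0 * f x)) by (intros; ring).
    rewrite Dp_lin; auto. ring.
  - intros f Hf Hp. apply Rmult_le_pos. left; apply Rinv_0_lt_compat; auto. apply HP; auto. lra.
Qed.

Lemma mu_mass X t : mass (mu t X) = (1 - exp (- (beta * r j * t))) / t * mass X.
Proof.
  unfold mu, mass. rewrite Dp_phi. unfold phi. rewrite exp_btr.
  change (tr (rowvec theta j t) (fun _ : vec => 1)) with (fun _ : vec => 1). unfold Rdiv. ring.
Qed.

Lemma mu_mass_le X t : IsMeasure d X -> 0 < t -> mass (mu t X) <= beta * r j * mass X.
Proof.
  intros HX Ht. rewrite mu_mass. apply Rmult_le_compat_r. apply (mass_pos d); auto.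
  assert (0 <= beta * r j * t) by (apply Rmult_le_pos; [apply Rmult_le_pos|]; lra).
  pose proof (one_minus_exp (beta * r j * t) H).
  apply (Rmult_le_reg_r t); auto. unfold Rdiv. rewrite Rmult_assoc, Rinv_l by lra. lra.
Qed.

Lemma mu_bound X t h c : JSub X -> 0 < t -> Cper d h -> (forall x, Rabs (h x) <= c) ->
  Rabs (mu t X h) <= c * (beta * r j * mass X).
Proof.
  intros HJ Ht Hh Hc. assert (Hc0 : 0 <= c) by (specialize (Hc (fun _ => 0)); pose proof (Rabs_pos (h (fun _ => 0))); lra).
  eapply Rle_trans. apply (m_bound d); auto. apply mu_IsMeasure; auto.
  apply Rmult_le_compat_l; auto. apply mu_mass_le; auto. apply HJ.
Qed.

Lemma mu_avg X e f : IsMeasure d X -> 0 < e -> Cper d f -> LimRight0 (fun t => mu t X (avg e f)) (X (qe e f)).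
Proof.
  intros HX He Hf eps Heps. set (M := mass X). assert (HM : 0 <= M) by (apply (mass_pos d); auto).
  set (eta := eps / (2 * (M + 1))). assert (Heta : 0 < eta) by (unfold eta; apply Rdiv_lt_0_compat; lra).
  destruct (qe_unif e f He Hf eta Heta) as [dl [Hdl P]]. exists dl; split; auto.
  intros t Ht. set (g := avg e f). assert (Hg : Cper d g) by (apply avg_Cper; auto).
  set (ct := exp (- (beta * t * r j))).
  assert (E : mu t X g = X (fun x => / t * g x + (- (/ t * ct)) * tr (rowvec theta j t) g x)).
  { rewrite (m_lin d X HX); auto. unfold mu. rewrite Dp_phi. unfold phi. fold ct. ring. apply Cper_tr; auto. }
  rewrite E. rewrite <- (m_minus d X HX).
  2:{ apply Cper_lin; auto. apply Cper_tr; auto. }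
  2:{ apply qe_Cper; auto. }
  apply Rle_lt_trans with (eta * M).
  - apply (m_bound d); auto. apply Cper_minus. apply Cper_lin; auto. apply Cper_tr; auto. apply qe_Cper; auto.
    intros x. specialize (P t Ht x). unfold tr. fold ct. fold g in P.
    replace (/ t * g x + - (/ t * ct) * g (vadd x (rowvec theta j t)) - qe e f x) with
      (/ t * (g x - ct * g (vadd x (rowvec theta j t))) - qe e f x) by ring. auto.
  - unfold eta. apply Rle_lt_trans with (eps / (2 * (M + 1)) * (M + 1)).
    apply Rmult_le_compat_l. left; apply Rdiv_lt_0_compat; lra. lra.
    replace (eps / (2 * (M + 1)) * (M + 1)) with (eps / 2) by (field; lra). lra.
Qed.

Lemma Gen_spec X f : JSub X -> Cper d f -> LimRight0 (fun t => mu t X f) (Gen theta beta r j X f).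
Proof.
  intros HJ Hf. pose proof HJ as [HX _].
  assert (Hex : exists L, LimRight0 (fun t => mu t X f) L).
  { apply LimRight0_cauchy. intros eps Heps.
    set (K := beta * r j * mass X). assert (HK : 0 <= K).
    { unfold K. apply Rmult_le_pos. apply Rmult_le_pos; lra. apply (mass_pos d); auto. }
    set (eta1 := eps / (4 * (K + 1))). assert (He1 : 0 < eta1) by (unfold eta1; apply Rdiv_lt_0_compat; lra).
    destruct (avg_close f Hf eta1 He1) as [e0 [He0 Pe]].
    set (e := e0 / 2). assert (He : 0 < e < e0) by (unfold e; lra).
    destruct (mu_avg X e f HX ltac:(lra) Hf (eps / 4) ltac:(lra)) as [dl [Hdl P]].
    exists dl; split; auto. intros s t Hs Ht.
    assert (Hg : Cper d (avg e f)) by (apply avg_Cper; auto; lra).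
    assert (B : forall u, 0 < u -> Rabs (mu u X f - mu u X (avg e f)) <= eta1 * K).
    { intros u Hu. rewrite <- (m_minus d (mu u X)); auto. apply mu_bound; auto. apply Cper_minus; auto.
      intros x. rewrite <- Rabs_Ropp. replace (- (f x - avg e f x)) with (avg e f x - f x) by ring. apply Pe; auto.
      apply mu_IsMeasure; auto. }
    pose proof (B s ltac:(lra)) as B1. pose proof (B t ltac:(lra)) as B2.
    specialize (P s Hs) as P1. specialize (P t Ht) as P2.
    assert (eta1 * K <= eps / 4).
    { unfold eta1. apply Rle_trans with (eps / (4 * (K + 1)) * (K + 1)).
      apply Rmult_le_compat_l. left; apply Rdiv_lt_0_compat; lra. lra. right; field; lra. }
    replace (mu s X f - mu t X f) with ((mu s X f - mu s X (avg e f)) + (mu s X (avg e f) - X (qe e f))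
      - (mu t X (avg e f) - X (qe e f)) - (mu t X f - mu t X (avg e f))) by ring.
    set (a1 := mu s X f - mu s X (avg e f)) in *. set (a2 := mu s X (avg e f) - X (qe e f)) in *.
    set (a3 := mu t X (avg e f) - X (qe e f)) in *. set (a4 := mu t X f - mu t X (avg e f)) in *.
    pose proof (Rabs_triang (a1 + a2 - a3) (- a4)). pose proof (Rabs_triang (a1 + a2) (- a3)).
    pose proof (Rabs_triang a1 a2). rewrite !Rabs_Ropp in *. unfold Rminus in *. lra. }
  unfold Gen. apply epsilon_spec. destruct Hex as [L HL]. exists L.
  eapply LimRight0_ext; [|apply HL]. intros; reflexivity.
Qed.

Lemma Gen_IsMeasure X : JSub X -> IsMeasure d (Gen theta beta r j X).
Proof.
  intros HJ. pose proof HJ as [HX _].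
  assert (Lin : forall a b f g, Cper d f -> Cper d g ->
    Gen theta beta r j X (fun x => a * f x + b * g x) = a * Gen theta beta r j X f + b * Gen theta beta r j X g).
  { intros a b f g Hf Hg. apply (LimRight0_unique (fun t => mu t X (fun x => a * f x + b * g x))).
    apply Gen_spec; auto. apply Cper_lin; auto.
    eapply LimRight0_ext; [|apply LimRight0_lin; apply Gen_spec; eauto].
    intros t Ht. simpl. rewrite (m_lin d (mu t X)); auto. apply mu_IsMeasure; auto. }
  split; [|split].
  - intros f g Hf Hg. rewrite <- (m_ext _ (fun x => 1 * f x + 1 * g x)) by (intros; ring).
    rewrite Lin; auto. ring.
  - intros a f Hf. rewrite <- (m_ext _ (fun x => a * f x + 0 * f x)) by (intros; ring).
    rewrite Lin; auto. ring.
  - intros f Hf Hp. apply (LimRight0_nonneg (fun t => mu t X f)). apply Gen_spec; auto.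
    intros t Ht. apply (m_pos d); auto. apply mu_IsMeasure; auto.
Qed.

Lemma LimRight0_const c : LimRight0 (fun _ => c) c.
Proof. intros eps He. exists 1; split; [lra|]. intros; rewrite Rminus_diag, Rabs_R0; auto. Qed.

Lemma Gen_mass X : JSub X -> mass (Gen theta beta r j X) = beta * r j * mass X.
Proof.
  intros HJ. apply (LimRight0_unique (fun t => mu t X (fun _ => 1))). apply Gen_spec; auto. apply Cper_const.
  assert (H := LimRight0_lin _ (fun _ => 0) _ 0 (mass X) 0 (exp_lim (beta * r j)) (LimRight0_const 0)).
  replace (beta * r j * mass X) with (mass X * (beta * r j) + 0 * 0) by ring.
  eapply LimRight0_ext; [|apply H]. intros t Ht. simpl. fold (mass (mu t X)). rewrite mu_mass. ring.
Qed.

Lemma Gen_avg X e f : JSub X -> 0 < e -> Cper d f -> Gen theta beta r j X (avg e f) = X (qe e f).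
Proof.
  intros HJ He Hf. apply (LimRight0_unique (fun t => mu t X (avg e f))).
  apply Gen_spec; auto. apply avg_Cper; auto. apply mu_avg; auto. apply HJ.
Qed.

Lemma ctn_plus (F G : R -> R) u : ctn F u -> ctn G u -> ctn (fun v => F v + G v) u.
Proof.
  intros HF HG eps He. destruct (HF (eps / 2) ltac:(lra)) as [d1 [Hd1 P1]]. destruct (HG (eps / 2) ltac:(lra)) as [d2 [Hd2 P2]].
  exists (Rmin d1 d2). split. apply Rmin_pos; auto. intros v Hv.
  specialize (P1 v ltac:(pose proof (Rmin_l d1 d2); lra)). specialize (P2 v ltac:(pose proof (Rmin_r d1 d2); lra)).
  replace (F v + G v - (F u + G u)) with ((F v - F u) + (G v - G u)) by ring.
  eapply Rle_lt_trans. apply Rabs_triang. lra.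
Qed.

Lemma exp_tail K c : 0 <= K -> 0 < c -> forall eps, 0 < eps -> exists M, 0 <= M /\
  forall T, M <= T -> K * exp (- (c * T)) < eps.
Proof.
  intros HK Hc eps He. exists (K / (c * eps)). split. { unfold Rdiv. apply Rmult_le_pos; auto. left; apply Rinv_0_lt_compat; nra. }
  intros T HT. assert (0 <= T). { eapply Rle_trans; [|apply HT]. unfold Rdiv. apply Rmult_le_pos; auto. left; apply Rinv_0_lt_compat; nra. }
  assert (Hc0 : 0 <= c * T) by nra. pose proof (exp_neg_small (c * T) Hc0).
  apply Rle_lt_trans with (K * / (1 + c * T)). apply Rmult_le_compat_l; auto.
  assert (HcT : c * T >= K / eps).
  { apply Rle_ge. apply Rle_trans with (c * (K / (c * eps))). right. field; split; lra. apply Rmult_le_compat_l; lra. }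
  apply (Rmult_lt_reg_r (1 + c * T)). lra. rewrite Rmult_assoc, Rinv_l, Rmult_1_r by lra.
  assert (K <= eps * (c * T)).
  { apply Rle_trans with (eps * (K / eps)). right; field; lra. apply Rmult_le_compat_l; lra. }
  nra.
Qed.

Lemma A_Gen X f : JSub X -> Cper d f -> Aop theta beta r j (Gen theta beta r j X) f = X f.
Proof.
  intros HJ Hf. pose proof HJ as [HX _].
  set (Y := Gen theta beta r j X). assert (HY : IsMeasure d Y) by (apply Gen_IsMeasure; auto).
  set (psi := phi theta beta r j X f). set (I := fun u => RI (phi theta beta r j Y f) 0 u).
  assert (Hcy : forall t, continuous (phi theta beta r j Y f) t) by (apply (phi_cont d); auto).
  assert (Dpsi : forall u, LimRight0 (fun t => (psi (u + t) - psi u) / t) (- phi theta beta r j Y f u)).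
  { intros u.
    assert (H := LimRight0_lin _ (fun _ => 0) _ 0 (- exp (- (beta * u * r j))) 0
       (Gen_spec X (tr (rowvec theta j u) f) HJ (Cper_tr d _ f Hf)) (LimRight0_const 0)).
    replace (- phi theta beta r j Y f u) with
      ((- exp (- (beta * u * r j))) * Y (tr (rowvec theta j u) f) + 0 * 0) by (unfold phi; ring).
    eapply LimRight0_ext; [|apply H].
    intros t Ht. simpl. unfold psi, mu. rewrite Dp_phi. unfold phi. rewrite tr_tr, rowvec_add.
    replace (exp (- (beta * (u + t) * r j))) with (exp (- (beta * u * r j)) * exp (- (beta * t * r j)))
      by (rewrite <- exp_plus; f_equal; ring).
    replace (t + u) with (u + t) by ring. field. lra. }
  assert (DI : forall u, LimRight0 (fun t => (I (u + t) - I u) / t) (phi theta beta r j Y f u)).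
  { intros u. apply deriv_right. apply RI_deriv; auto. }
  set (Phi := fun u => psi u + I u).
  assert (HPhi : forall T, 0 <= T -> Phi T = Phi 0).
  { intros T HT. apply RD0; auto.
    - intros u _. apply ctn_plus. apply cont_ctn. apply (phi_cont d); auto. apply (deriv_ctn I u (phi theta beta r j Y f u)). apply RI_deriv; auto.
    - intros u _.
      assert (H := LimRight0_lin _ _ _ _ 1 1 (Dpsi u) (DI u)).
      replace 0 with (1 * (- phi theta beta r j Y f u) + 1 * phi theta beta r j Y f u) by ring.
      eapply LimRight0_ext; [|apply H].
      intros t Ht. unfold Phi. field. lra. }
  assert (HP0 : Phi 0 = X f).
  { unfold Phi, psi, I. rewrite RI_point. unfold phi. rewrite rowvec0. rewrite Rmult_0_r, Rmult_0_l, Ropp_0, exp_0. ring. }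
  apply A_eq. split.
  - intros T _. apply ex_RInt_cont; auto.
  - intros eps He. destruct (Cper_bounded d f Hf) as [C [HC0 HC]].
    assert (Hbr : 0 < beta * r j) by (apply Rmult_lt_0_compat; lra).
    destruct (exp_tail (C * mass X) (beta * r j) ltac:(apply Rmult_le_pos; auto; apply (mass_pos d); auto) Hbr eps He) as [M [HM P]].
    exists M; split; auto. intros T HT.
    assert (E : RI (phi theta beta r j Y f) 0 T - X f = - psi T).
    { rewrite <- HP0, <- (HPhi T) by lra. unfold Phi, I. ring. }
    rewrite E, Rabs_Ropp. eapply Rle_lt_trans. apply (phi_bound d); auto. apply P; auto.
Qed.

End OneDim.

Definition lsum (l : list nat) (g : nat -> R) : R := fold_right (fun j acc => g j + acc) 0 l.
Definition lprod (l : list nat) (g : nat -> R) : R := fold_right (fun j acc => g j * acc) 1 l.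

Lemma lsum_app l1 l2 g : lsum (l1 ++ l2) g = lsum l1 g + lsum l2 g.
Proof. induction l1; simpl; [ring|]. rewrite IHl1; ring. Qed.
Lemma lprod_app l1 l2 g : lprod (l1 ++ l2) g = lprod l1 g * lprod l2 g.
Proof. induction l1; simpl; [ring|]. rewrite IHl1; ring. Qed.
Lemma sumR_lsum k g : sumR k g = lsum (seq 0 k) g.
Proof. induction k; auto. change (sumR (S k) g) with (sumR k g + g k). rewrite seq_S, lsum_app, IHk. simpl. ring. Qed.
Lemma prodR_lprod k g : prodR k g = lprod (seq 0 k) g.
Proof. induction k; auto. change (prodR (S k) g) with (prodR k g * g k). rewrite seq_S, lprod_app, IHk. simpl. ring. Qed.

Lemma lsum_ext l g g' : (forall j, In j l -> g j = g' j) -> lsum l g = lsum l g'.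
Proof. induction l; simpl; intros; auto. rewrite H, IHl; auto. Qed.
Lemma lprod_ext l g g' : (forall j, In j l -> g j = g' j) -> lprod l g = lprod l g'.
Proof. induction l; simpl; intros; auto. rewrite H, IHl; auto. Qed.
Lemma lprod_pos l g : (forall j, In j l -> 0 < g j) -> 0 < lprod l g.
Proof. induction l; simpl; intros; [lra|]. apply Rmult_lt_0_compat; auto. Qed.

Lemma vv x a b : vadd (vadd x a) b = vadd (vadd x b) a.
Proof. apply functional_extensionality; intro; unfold vadd; ring. Qed.

Section Lists.
Variable d : nat.
Variable theta : nat -> nat -> R.
Variable beta : R.
Variable r : nat -> R.
Hypothesis Hbeta : 0 < beta.

Local Notation A := (Aop theta beta r).
Local Notation G := (Gen theta beta r).
Local Notation D := (Dop theta beta r).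
Local Notation Dpp := (Dp theta beta r).

Definition PopL (l : list nat) (s : vec) (X : meas) : meas := fold_right (fun j m => D j s m) X l.
Definition AcompL (l : list nat) (m : meas) : meas := fold_left (fun m j => A j m) l m.
Definition GcompL (l : list nat) (m : meas) : meas := fold_left (fun m j => G j m) l m.
Definition SubL (l : list nat) (X : meas) : Prop :=
  IsMeasure d X /\ forall s : vec, (forall j, In j l -> 0 <= s j) -> PosFun d (PopL l s X).
Definition MEq (m1 m2 : meas) : Prop := forall f, Cper d f -> m1 f = m2 f.

Lemma Dop_comm i j s m : D i s (D j s m) = D j s (D i s m).
Proof.
  apply functional_extensionality; intro f. unfold Dop, pushR.
  rewrite (m_ext m (fun x => f (vadd (vadd x (rowvec theta i (s i))) (rowvec theta j (s j))))
     (fun x => f (vadd (vadd x (rowvec theta j (s j))) (rowvec theta i (s i))))) by (intros; rewrite vv; auto).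
  ring.
Qed.

Lemma Dop_PopL i l s X : D i s (PopL l s X) = PopL l s (D i s X).
Proof. induction l; simpl; auto. rewrite Dop_comm, IHl. reflexivity. Qed.

Lemma PopL_s l s s' X : (forall i, In i l -> s i = s' i) -> PopL l s X = PopL l s' X.
Proof.
  induction l; simpl; intros H; auto. rewrite IHl by auto. apply Dop_sj. auto.
Qed.

Lemma PopL_scal l s c X : PopL l s (fun h => c * X h) = fun h => c * PopL l s X h.
Proof.
  induction l; simpl; auto. rewrite IHl. apply functional_extensionality; intro f. unfold Dop, pushR. ring.
Qed.

Lemma PopL_ext l s X X' : MEq X X' -> MEq (PopL l s X) (PopL l s X').
Proof.
  induction l; simpl; intros H f Hf; auto. unfold Dop, pushR. rewrite !IHl; auto.
  apply (Cper_tr d _ f Hf).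
Qed.

Lemma PopL_lim l s (M : R -> meas) Y : (forall h, Cper d h -> LimRight0 (fun t => M t h) (Y h)) ->
  forall h, Cper d h -> LimRight0 (fun t => PopL l s (M t) h) (PopL l s Y h).
Proof.
  induction l; simpl; intros H h Hh; auto.
  unfold Dop, pushR.
  assert (H1 := IHl H h Hh). assert (H2 := IHl H _ (Cper_tr d (rowvec theta a (s a)) h Hh)).
  assert (H3 := LimRight0_lin _ _ _ _ 1 (- exp (- (beta * s a * r a))) H1 H2).
  replace (PopL l s Y h - exp (- (beta * s a * r a)) * PopL l s Y (fun x => h (vadd x (rowvec theta a (s a)))))
    with (1 * PopL l s Y h + - exp (- (beta * s a * r a)) * PopL l s Y (tr (rowvec theta a (s a)) h)) by (unfold tr; ring).
  eapply LimRight0_ext; [|apply H3]. intros t _. unfold tr. ring.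
Qed.

Definition BT (Z : meas) : Prop := forall h, Cper d h -> exists K, forall v, Rabs (Z (tr v h)) <= K.

Lemma BT_meas X : IsMeasure d X -> BT X.
Proof.
  intros HX h Hh. destruct (Cper_bounded d h Hh) as [C [HC0 HC]]. exists (C * mass X). intros v.
  apply (m_bound d); auto. apply Cper_tr; auto. intros; unfold tr; auto.
Qed.

Lemma BT_Dop i s Z : 0 < r i -> 0 <= s i -> BT Z -> BT (D i s Z).
Proof.
  intros Hr Hs HZ h Hh. destruct (HZ h Hh) as [K HK]. exists (K + K). intros v.
  unfold Dop, pushR. change (fun x => tr v h (vadd x (rowvec theta i (s i)))) with (tr (rowvec theta i (s i)) (tr v h)).
  rewrite tr_tr. assert (He : exp (- (beta * s i * r i)) <= 1) by (apply exp_neg_le1; apply Rmult_le_pos; [apply Rmult_le_pos|]; lra).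
  pose proof (exp_pos (- (beta * s i * r i))). specialize (HK v) as H1. specialize (HK (vadd (rowvec theta i (s i)) v)) as H2.
  eapply Rle_trans. apply Rabs_triang. rewrite Rabs_Ropp, Rabs_mult, (Rabs_right (exp (- (beta * s i * r i)))) by lra.
  assert (exp (- (beta * s i * r i)) * Rabs (Z (tr (vadd (rowvec theta i (s i)) v) h)) <= 1 * K).
  { apply Rmult_le_compat; try lra; try apply Rabs_pos. }
  lra.
Qed.

Lemma pos_limit l : NoDup l -> (forall i, In i l -> 0 < r i) -> forall Z, BT Z ->
  (forall s, (forall i, In i l -> 0 <= s i) -> PosFun d (PopL l s Z)) -> PosFun d Z.
Proof.
  induction l as [|i l IH]; intros Hnd Hr Z HZ H.
  - apply (H (fun _ => 0)). intros; lra.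
  - inversion Hnd as [|? ? Hni Hnd']. subst.
    assert (HN : forall N, 0 <= N -> PosFun d (D i (fun _ => N) Z)).
    { intros N HN. apply IH; auto. intros; apply Hr; simpl; auto.
      apply BT_Dop; auto. apply Hr; simpl; auto.
      intros s Hs. rewrite (PopL_s l s (upd s i N)).
      2:{ intros i0 Hi0. rewrite upd_neq; auto. intro; subst; contradiction. }
      rewrite (Dop_sj theta beta r i (fun _ => N) (upd s i N)) by (rewrite upd_eq; auto).
      rewrite <- Dop_PopL. apply (H (upd s i N)). intros i0 Hi0. simpl in Hi0. destruct Hi0.
      subst; rewrite upd_eq; auto. rewrite upd_neq; auto. intro; subst; contradiction. }
    intros h Hh Hp. apply Rnot_lt_le. intro Hlt.
    destruct (HZ h Hh) as [K HK]. assert (HK0 : 0 <= K) by (specialize (HK (fun _ => 0)); pose proof (Rabs_pos (Z (tr (fun _ => 0) h))); lra).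
    assert (Hbr : 0 < beta * r i) by (apply Rmult_lt_0_compat; auto; apply Hr; simpl; auto).
    destruct (exp_tail (K) (beta * r i) HK0 Hbr (- Z h) ltac:(lra)) as [M [HM PM]].
    specialize (HN M HM h Hh Hp). unfold Dop, pushR in HN. cbv beta in HN.
    specialize (PM M (Rle_refl M)). specialize (HK (rowvec theta i M)). unfold tr in HK.
    apply Rabs_le_inv in HK. rewrite exp_btr in HN.
    assert (exp (- (beta * r i * M)) * (- K) <= exp (- (beta * r i * M)) * Z (fun x => h (vadd x (rowvec theta i M)))).
    { apply Rmult_le_compat_l. left; apply exp_pos. lra. }
    rewrite Rmult_comm in PM. lra.
Qed.

Lemma Dp_Dop j t X : Dpp j t X = D j (fun _ => t) X.
Proof. reflexivity. Qed.

Lemma SubL_JSub j l X : NoDup (j :: l) -> (forall i, In i (j :: l) -> 0 < r i) -> SubL (j :: l) X ->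
  JSub d theta beta r j X.
Proof.
  intros Hnd Hr [HX HP]. inversion Hnd as [|? ? Hnj Hnd']. subst. split; auto.
  intros t Ht. apply (pos_limit l); auto. intros; apply Hr; simpl; auto.
  apply BT_Dop; auto. apply Hr; simpl; auto. apply BT_meas; auto.
  intros s Hs. rewrite (PopL_s l s (upd s j t)).
  2:{ intros i0 Hi0. rewrite upd_neq; auto. intro; subst; contradiction. }
  rewrite Dp_Dop, (Dop_sj theta beta r j (fun _ => t) (upd s j t)) by (rewrite upd_eq; auto).
  rewrite <- Dop_PopL. apply (HP (upd s j t)). intros i0 Hi0. simpl in Hi0. destruct Hi0.
  subst; rewrite upd_eq; auto. rewrite upd_neq; auto. intro; subst; contradiction.
Qed.


Definition rpos (l : list nat) := forall i, In i l -> 0 < r i.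
Lemma rpos_cons j l : rpos (j :: l) -> 0 < r j /\ rpos l.
Proof. intros H. split. apply H; simpl; auto. intros i Hi; apply H; simpl; auto. Qed.

Lemma MEq_sym m1 m2 : MEq m1 m2 -> MEq m2 m1.
Proof. intros H f Hf; symmetry; auto. Qed.
Lemma MEq_trans m1 m2 m3 : MEq m1 m2 -> MEq m2 m3 -> MEq m1 m3.
Proof. intros H1 H2 f Hf; rewrite H1; auto. Qed.

Lemma AcompL_IsMeasure l m : rpos l -> IsMeasure d m -> IsMeasure d (AcompL l m).
Proof.
  revert m; induction l as [|j l IH]; intros m Hr Hm; simpl; auto.
  destruct (rpos_cons j l Hr). apply IH; auto. apply A_IsMeasure; auto.
Qed.

Lemma AcompL_ext l m m' : MEq m m' -> MEq (AcompL l m) (AcompL l m').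
Proof.
  revert m m'; induction l as [|j l IH]; intros m m' H; simpl; auto.
  apply IH. intros f Hf. apply (A_ext d); auto.
Qed.

Lemma AcompL_mass l m : rpos l -> IsMeasure d m -> mass (AcompL l m) = mass m * lprod l (fun j => / (beta * r j)).
Proof.
  revert m; induction l as [|j l IH]; intros m Hr Hm; simpl. ring.
  destruct (rpos_cons j l Hr). rewrite IH; auto. rewrite (A_mass d); auto. ring. apply A_IsMeasure; auto.
Qed.

Lemma AcompL_Dop l j s Z : rpos l -> IsMeasure d Z -> MEq (AcompL l (D j s Z)) (D j s (AcompL l Z)).
Proof.
  revert Z; induction l as [|i l IH]; intros Z Hr HZ; simpl. { intros f Hf; reflexivity. }
  destruct (rpos_cons i l Hr).
  eapply MEq_trans. apply AcompL_ext. intros f Hf. apply (DA_comm d); auto.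
  apply IH; auto. apply A_IsMeasure; auto.
Qed.

Lemma SubL_Acomp l mu0 : rpos l -> IsMeasure d mu0 -> SubL l (AcompL l mu0).
Proof.
  revert mu0; induction l as [|j l IH]; intros mu0 Hr Hm.
  - split; auto. intros s _. simpl. destruct Hm as [_ [_ H]]; auto.
  - destruct (rpos_cons j l Hr) as [Hrj Hrl]. split. apply AcompL_IsMeasure; auto.
    intros s Hs. simpl. rewrite Dop_PopL.
    set (B := Bop theta beta r j (s j) mu0).
    assert (HB : IsMeasure d B) by (apply B_IsMeasure; auto; apply Hs; simpl; auto).
    assert (E : MEq (D j s (AcompL l (A j mu0))) (AcompL l B)).
    { eapply MEq_trans. apply MEq_sym. apply AcompL_Dop; auto. apply A_IsMeasure; auto.
      apply AcompL_ext. intros f Hf. rewrite (Dop_sj theta beta r j s (fun _ => s j)) by auto.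
      apply (DA_B d); auto. apply Hs; simpl; auto. }
    intros h Hh Hp. rewrite (PopL_ext l s _ _ E h Hh).
    destruct (IH B Hrl HB) as [_ HP]. apply HP; auto. intros; apply Hs; simpl; auto.
Qed.

Lemma A_comm i j W : 0 < r i -> 0 < r j -> IsMeasure d W -> MEq (A i (A j W)) (A j (A i W)).
Proof.
  intros Hri Hrj HW f Hf.
  set (X := A i (A j W)).
  assert (HJ : JSub d theta beta r j X).
  { split. apply A_IsMeasure; auto. apply A_IsMeasure; auto.
    intros t Ht h Hh Hp. unfold X. rewrite Dp_Dop, <- (DA_comm d); auto; [|apply A_IsMeasure; auto].
    rewrite (A_ext d theta beta r i _ (Bop theta beta r j t W)); auto.
    - apply (A_IsMeasure d); auto. apply B_IsMeasure; auto.
    - intros g Hg. rewrite <- Dp_Dop. apply (DA_B d); auto. }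
  rewrite <- (A_Gen d theta beta r Hbeta j Hrj X f HJ Hf).
  apply (A_ext d); auto. intros g Hg. unfold X. apply (Gen_AA d); auto.
Qed.

Lemma AcompL_A l j Y : rpos l -> 0 < r j -> IsMeasure d Y -> MEq (AcompL l (A j Y)) (A j (AcompL l Y)).
Proof.
  revert Y; induction l as [|i l IH]; intros Y Hr Hrj HY; simpl. { intros f Hf; reflexivity. }
  destruct (rpos_cons i l Hr).
  eapply MEq_trans. apply AcompL_ext. apply A_comm; auto.
  apply IH; auto. apply A_IsMeasure; auto.
Qed.

Definition lvec (l : list nat) (w : vec) : vec := fun i => lsum l (fun j => theta j i * w j).

Lemma IterInt_Acomp l m f : NoDup l -> rpos l -> IsMeasure d m -> Cper d f ->
  IterInt l (fun w => exp (- (beta * lsum l (fun j => w j * r j))) * m (fun x => f (vadd x (lvec l w))))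
    (AcompL l m f).
Proof.
  revert m; induction l as [|j l IH]; intros m Hnd Hr Hm Hf.
  - simpl. intros w. unfold lvec; simpl. rewrite Rmult_0_r, Ropp_0, exp_0, Rmult_1_l.
    apply m_ext. intros x. f_equal. apply functional_extensionality; intro; unfold vadd; ring.
  - inversion Hnd as [|? ? Hnj Hnd']. subst. destruct (rpos_cons j l Hr) as [Hrj Hrl].
    exists (fun w => exp (- (beta * lsum l (fun i => w i * r i))) * A j m (fun x => f (vadd x (lvec l w)))).
    split.
    + intros w. apply ImpR_Improper.
      set (S := lsum l (fun i => w i * r i)). set (V := lvec l w).
      assert (HA : ImpR (phi theta beta r j m (tr V f)) (A j m (tr V f))) by (apply (A_spec d); auto; apply Cper_tr; auto).
      eapply ImpR_ext; [|apply (ImpR_scal _ _ (exp (- (beta * S))) HA)].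
      intros t. simpl. unfold phi.
      assert (E1 : lsum l (fun i => upd w j t i * r i) = S).
      { apply lsum_ext. intros i Hi. rewrite upd_neq; auto. intro; subst; contradiction. }
      assert (E2 : lvec (j :: l) (upd w j t) = vadd (rowvec theta j t) V).
      { apply functional_extensionality; intro i. unfold lvec, vadd, rowvec, V. simpl. rewrite upd_eq.
        f_equal. ring. apply lsum_ext. intros i0 Hi0. rewrite upd_neq; auto. intro; subst; contradiction. }
      rewrite E1, E2, upd_eq, tr_tr.
      replace (exp (- (beta * (t * r j + S)))) with (exp (- (beta * S)) * exp (- (beta * t * r j)))
        by (rewrite <- exp_plus; f_equal; ring).
      unfold tr. ring.
    + apply IH; auto. apply A_IsMeasure; auto.
Qed.

Lemma Gen_SubL j l nu : NoDup (j :: l) -> rpos (j :: l) -> SubL (j :: l) nu -> SubL l (G j nu).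
Proof.
  intros Hnd Hr Hs. inversion Hnd as [|? ? Hnj Hnd']. subst. destruct (rpos_cons j l Hr) as [Hrj Hrl].
  assert (HJ := SubL_JSub j l nu Hnd Hr Hs). destruct Hs as [Hnu HP].
  split. apply (Gen_IsMeasure d); auto.
  intros s Hs0 h Hh Hp.
  apply (LimRight0_nonneg (fun t => PopL l s (mu theta beta r j t nu) h)).
  - apply PopL_lim; auto. intros; apply (Gen_spec d); auto.
  - intros t Ht. unfold mu. rewrite PopL_scal. apply Rmult_le_pos. left; apply Rinv_0_lt_compat; auto.
    rewrite (PopL_s l s (upd s j t)).
    2:{ intros i0 Hi0. rewrite upd_neq; auto. intro; subst; contradiction. }
    rewrite Dp_Dop, (Dop_sj theta beta r j (fun _ => t) (upd s j t)) by (rewrite upd_eq; auto).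
    rewrite <- Dop_PopL. apply (HP (upd s j t)); auto. intros i0 Hi0. simpl in Hi0. destruct Hi0.
    subst; rewrite upd_eq; lra. rewrite upd_neq; auto. intro; subst; contradiction.
Qed.

Lemma Gcomp_main l : NoDup l -> rpos l -> forall nu, SubL l nu ->
  IsMeasure d (GcompL l nu) /\ mass (GcompL l nu) = mass nu * lprod l (fun j => beta * r j) /\
  forall f, Cper d f -> IterLim l (fun s => / lprod l s * PopL l s nu f) (GcompL l nu f).
Proof.
  induction l as [|j l IH]; intros Hnd Hr nu Hs.
  - simpl. split. apply Hs. split. ring. intros f Hf s. rewrite Rinv_1, Rmult_1_l. reflexivity.
  - inversion Hnd as [|? ? Hnj Hnd']. subst. destruct (rpos_cons j l Hr) as [Hrj Hrl].
    assert (HJ := SubL_JSub j l nu Hnd Hr Hs).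
    assert (HY := Gen_SubL j l nu Hnd Hr Hs).
    destruct (IH Hnd' Hrl (G j nu) HY) as [H1 [H2 H3]].
    simpl. split; auto. split.
    { rewrite H2, (Gen_mass d); auto. ring. }
    intros f Hf. exists (fun s => / lprod l s * PopL l s (G j nu) f). split; [|apply H3; auto].
    intros s Hspos.
    assert (HP : 0 < lprod l s) by (apply lprod_pos; auto).
    assert (HL := PopL_lim l s (fun t => mu theta beta r j t nu) (G j nu)
       (fun h Hh => Gen_spec d theta beta r Hbeta j Hrj nu h HJ Hh) f Hf).
    assert (HL2 := LimRight0_lin _ (fun _ => 0) _ 0 (/ lprod l s) 0 HL (LimRight0_const 0)).
    rewrite Rmult_0_r, Rplus_0_r in HL2.
    eapply LimRight0_ext; [|apply HL2]. intros t Ht. cbv beta. rewrite Rmult_0_r, Rplus_0_r.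
    rewrite upd_eq. rewrite (lprod_ext l (upd s j t) s).
    2:{ intros i0 Hi0. rewrite upd_neq; auto. intro; subst; contradiction. }
    rewrite Dop_PopL. rewrite (PopL_s l (upd s j t) s).
    2:{ intros i0 Hi0. rewrite upd_neq; auto. intro; subst; contradiction. }
    rewrite (Dop_sj theta beta r j (upd s j t) (fun _ => t)) by (rewrite upd_eq; auto).
    unfold mu. rewrite PopL_scal. rewrite <- Dp_Dop. rewrite Rinv_mult. ring.
Qed.

Lemma Acomp_Gcomp l nu : NoDup l -> rpos l -> SubL l nu -> MEq (AcompL l (GcompL l nu)) nu.
Proof.
  revert nu; induction l as [|j l IH]; intros nu Hnd Hr Hs. { intros f Hf; reflexivity. }
  inversion Hnd as [|? ? Hnj Hnd']. subst. destruct (rpos_cons j l Hr) as [Hrj Hrl].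
  assert (HJ := SubL_JSub j l nu Hnd Hr Hs). assert (HY := Gen_SubL j l nu Hnd Hr Hs).
  destruct (Gcomp_main l Hnd' Hrl (G j nu) HY) as [HGm _].
  simpl. eapply MEq_trans. apply AcompL_A; auto.
  intros f Hf. rewrite (A_ext d theta beta r j _ (G j nu)); auto.
  apply (A_Gen d); auto. apply IH; auto.
Qed.

Lemma AcompL_inj l Y1 Y2 : rpos l -> IsMeasure d Y1 -> IsMeasure d Y2 ->
  MEq (AcompL l Y1) (AcompL l Y2) -> MEq Y1 Y2.
Proof.
  revert Y1 Y2; induction l as [|j l IH]; intros Y1 Y2 Hr H1 H2 H; simpl in *; auto.
  destruct (rpos_cons j l Hr) as [Hrj Hrl].
  assert (E : MEq (A j Y1) (A j Y2)) by (apply IH; auto; apply A_IsMeasure; auto).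
  intros f Hf. rewrite <- (Gen_A d theta beta r Hbeta j Y1 f), <- (Gen_A d theta beta r Hbeta j Y2 f) by auto.
  apply (Gen_ext d); auto.
Qed.

Lemma Gcomp_Acomp l mu0 : NoDup l -> rpos l -> IsMeasure d mu0 -> MEq (GcompL l (AcompL l mu0)) mu0.
Proof.
  intros Hnd Hr Hm. assert (HS := SubL_Acomp l mu0 Hr Hm).
  destruct (Gcomp_main l Hnd Hr _ HS) as [HW _].
  apply (AcompL_inj l); auto. apply Acomp_Gcomp; auto.
Qed.

Lemma comb_IsMeasure m1 m2 a b : IsMeasure d m1 -> IsMeasure d m2 -> 0 <= a -> 0 <= b ->
  IsMeasure d (fun f => a * m1 f + b * m2 f).
Proof.
  intros H1 H2 Ha Hb. split; [|split].
  - intros f g Hf Hg. rewrite (m_plus d m1), (m_plus d m2); auto. ring.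
  - intros c f Hf. rewrite (m_scal d m1), (m_scal d m2); auto. ring.
  - intros f Hf Hp. apply Rplus_le_le_0_compat; apply Rmult_le_pos; auto; apply (m_pos d); auto.
Qed.

Lemma A_comb j m1 m2 a b f : 0 < r j -> IsMeasure d m1 -> IsMeasure d m2 -> Cper d f ->
  A j (fun g => a * m1 g + b * m2 g) f = a * A j m1 f + b * A j m2 f.
Proof.
  intros Hr H1 H2 Hf. apply A_eq.
  assert (HA1 : ImpR (phi theta beta r j m1 f) (A j m1 f)) by (apply (A_spec d); auto).
  assert (HA2 : ImpR (phi theta beta r j m2 f) (A j m2 f)) by (apply (A_spec d); auto).
  eapply ImpR_ext; [|apply (ImpR_lin _ _ _ _ a b HA1 HA2)].
  intros t. unfold phi. ring.
Qed.

Lemma AcompL_lin l m1 m2 a b : rpos l -> IsMeasure d m1 -> IsMeasure d m2 -> 0 <= a -> 0 <= b ->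
  MEq (AcompL l (fun f => a * m1 f + b * m2 f)) (fun f => a * AcompL l m1 f + b * AcompL l m2 f).
Proof.
  revert m1 m2; induction l as [|j l IH]; intros m1 m2 Hr H1 H2 Ha Hb; simpl. { intros f Hf; reflexivity. }
  destruct (rpos_cons j l Hr) as [Hrj Hrl].
  eapply MEq_trans. apply AcompL_ext. intros f Hf. apply A_comb; auto.
  apply IH; auto; apply A_IsMeasure; auto.
Qed.

End Lists.

Section WSC.
Variable d : nat.

Lemma WSC_id (Acls : meas -> Prop) : WeakStarCont d Acls (fun m => m).
Proof.
  intros m0 Hm0 f Hf eps He. exists (f :: nil), eps. split; auto. split.
  intros g [Hg|[]]; subst; auto. intros m Hm H. apply H. simpl; auto.
Qed.

Lemma WSC_class (A B : meas -> Prop) Phi : (forall m, B m -> A m) -> WeakStarCont d A Phi -> WeakStarCont d B Phi.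
Proof.
  intros HAB H m0 Hm0 f Hf eps He. destruct (H m0 (HAB m0 Hm0) f Hf eps He) as [gs [dl [Hd [Hgs P]]]].
  exists gs, dl. split; [exact Hd|]. split; [exact Hgs|]. intros m Hm Hc. apply P; auto.
Qed.

Lemma WSC_comp (A B : meas -> Prop) Phi1 Phi2 : WeakStarCont d A Phi1 -> (forall m, A m -> B (Phi1 m)) ->
  WeakStarCont d B Phi2 -> WeakStarCont d A (fun m => Phi2 (Phi1 m)).
Proof.
  intros H1 HAB H2 m0 Hm0 f Hf eps He.
  destruct (H2 (Phi1 m0) (HAB m0 Hm0) f Hf eps He) as [gs [dl [Hd [Hgs P]]]].
  assert (C : forall gs0, (forall g, In g gs0 -> Cper d g) -> exists gs' dl', 0 < dl' /\ (forall g, In g gs' -> Cper d g) /\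
    forall m, A m -> (forall g, In g gs' -> Rabs (m g - m0 g) < dl') -> forall g, In g gs0 -> Rabs (Phi1 m g - Phi1 m0 g) < dl).
  { induction gs0 as [|g0 gs0 IH]; intros Hc.
    - exists nil, 1. split; [lra|]. split. intros g []. intros m _ _ g [].
    - destruct IH as [gs1 [d1 [Hd1 [Hc1 P1]]]]. intros; apply Hc; simpl; auto.
      destruct (H1 m0 Hm0 g0 (Hc g0 (or_introl eq_refl)) dl Hd) as [gs2 [d2 [Hd2 [Hc2 P2]]]].
      exists (gs1 ++ gs2), (Rmin d1 d2). split. apply Rmin_pos; auto. split.
      + intros g Hg. apply in_app_or in Hg. destruct Hg; auto.
      + intros m Hm Hc3 g [Hg|Hg].
        * subst. apply P2; auto. intros g' Hg'. eapply Rlt_le_trans. apply Hc3. apply in_or_app; auto. apply Rmin_r.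
        * apply P1; auto. intros g' Hg'. eapply Rlt_le_trans. apply Hc3. apply in_or_app; auto. apply Rmin_l. }
  destruct (C gs Hgs) as [gs' [dl' [Hd' [Hc' P']]]].
  exists gs', dl'. split; [exact Hd'|]. split; [exact Hc'|]. intros m Hm Hc. apply P. apply HAB; auto. intros g Hg. apply P'; auto.
Qed.

Lemma grid (h : R) : 0 < h -> forall n u, 0 <= u <= INR n * h -> exists i, (i <= n)%nat /\ Rabs (u - INR i * h) <= h.
Proof.
  intros Hh n. induction n; intros u Hu.
  - exists O. split; auto. simpl in *. rewrite Rmult_0_l, Rminus_0_r, Rabs_right; lra.
  - destruct (Rle_dec u (INR n * h)).
    + destruct (IHn u) as [i [Hi Hu2]]. split; lra. exists i; split; auto.
    + exists (S n). split; auto. rewrite S_INR in *. rewrite Rabs_left1; nra.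
Qed.

End WSC.

Lemma exp_mono x y : x <= y -> exp x <= exp y.
Proof. intros H. destruct H. left; apply exp_increasing; auto. subst; lra. Qed.

Lemma m_tr_UC_unif d f : Cper d f -> forall eps, 0 < eps -> exists delta, 0 < delta /\
  forall a b : vec, (forall i, (i < d)%nat -> Rabs (a i - b i) < delta) ->
  forall m, IsMeasure d m -> Rabs (m (tr a f) - m (tr b f)) <= eps * mass m.
Proof.
  intros Hf eps He. destruct (tr_UC d f Hf eps He) as [dl [Hd H]]. exists dl; split; auto.
  intros a b Hab m Hm. rewrite <- (m_minus d); auto; try apply Cper_tr; auto.
  apply (m_bound d); auto. apply Cper_minus; apply Cper_tr; auto.
  intros x. left. apply H; auto.
Qed.

Section WSC2.
Variable d : nat.
Variable theta : nat -> nat -> R.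
Variable beta : R.
Variable r : nat -> R.
Hypothesis Hbeta : 0 < beta.

Lemma WSC_A j : 0 < r j -> WeakStarCont d (IsMeasure d) (Aop theta beta r j).
Proof.
  intros Hr m0 Hm0 f Hf eps He.
  destruct (Cper_bounded d f Hf) as [C [HC0 HC]].
  set (M0 := mass m0). assert (HM0 : 0 <= M0) by (apply (mass_pos d); auto).
  set (c := beta * r j). assert (Hc : 0 < c) by (unfold c; apply Rmult_lt_0_compat; lra).
  set (K := (2 * M0 + 1) * C). assert (HK : 0 <= K) by (unfold K; apply Rmult_le_pos; lra).
  destruct (exp_tail K (c / 2) HK ltac:(lra) (eps * c / 4) ltac:(apply Rdiv_lt_0_compat; [apply Rmult_lt_0_compat|]; lra)) as [T [HT PT]].
  set (eta := eps * c / 4). assert (Heta : 0 < eta) by (unfold eta; apply Rdiv_lt_0_compat; [apply Rmult_lt_0_compat|]; lra).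
  set (e1 := eta / (3 * (M0 + 1))). assert (He1 : 0 < e1) by (unfold e1; apply Rdiv_lt_0_compat; lra).
  destruct (m_tr_UC_unif d f Hf e1 He1) as [d1 [Hd1 PU]].
  destruct (rowvec_close d theta j d1 Hd1) as [h1 [Hh1 PR]].
  set (hs := h1 / 2). assert (Hhs : 0 < hs) by (unfold hs; lra).
  destruct (archimed (T / hs)) as [Hup _].
  assert (HTh : 0 <= T / hs) by (apply Rmult_le_pos; auto; left; apply Rinv_0_lt_compat; auto).
  set (N := Z.to_nat (up (T / hs))).
  assert (HN : T <= INR N * hs).
  { unfold N. rewrite INR_IZR_INZ, Z2Nat.id by (apply le_IZR; lra).
    apply (Rmult_le_reg_r (/ hs)). apply Rinv_0_lt_compat; auto. rewrite Rmult_assoc, Rinv_r, Rmult_1_r by lra. fold (T / hs). lra. }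
  set (gs := (fun _ : vec => 1) :: map (fun i => tr (rowvec theta j (INR i * hs)) f) (seq 0 (S N))).
  exists gs, (Rmin 1 (eta / 3)). split. { apply Rmin_pos; lra. } split.
  { intros g [Hg|Hg]. subst; apply Cper_const. apply in_map_iff in Hg. destruct Hg as [i [Hi _]]. subst. apply Cper_tr; auto. }
  intros m Hm Hclose.
  assert (Hmass : mass m <= M0 + 1).
  { specialize (Hclose (fun _ => 1) (or_introl eq_refl)). apply Rabs_def2 in Hclose. pose proof (Rmin_l 1 (eta / 3)). unfold M0, mass in *. lra. }
  assert (Hmpos : 0 <= mass m) by (apply (mass_pos d); auto).
  set (Dl := fun u => m (tr (rowvec theta j u) f) - m0 (tr (rowvec theta j u) f)).
  assert (HD1 : forall u, 0 <= u <= T -> Rabs (Dl u) <= eta).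
  { intros u Hu. destruct (grid hs Hhs N u ltac:(lra)) as [i [Hi Hui]].
    set (ui := INR i * hs).
    assert (Hcl : forall ii, (ii < d)%nat -> Rabs (rowvec theta j u ii - rowvec theta j ui ii) < d1).
    assert (Hui2 : Rabs (u - ui) < h1) by (unfold ui; unfold hs in *; lra).
    { intros ii Hii. specialize (PR u ui Hui2 (fun _ => 0) ii Hii). unfold vadd in PR. rewrite !Rplus_0_r in PR. auto. }
    assert (A1 := PU _ _ Hcl m Hm). assert (A2 := PU _ _ Hcl m0 Hm0).
    assert (A3 : Rabs (m (tr (rowvec theta j ui) f) - m0 (tr (rowvec theta j ui) f)) < eta / 3).
    { eapply Rlt_le_trans. apply Hclose. right. apply in_map_iff. exists i. split; auto. apply in_seq. lia. apply Rmin_r. }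
    assert (e1 * mass m <= eta / 3).
    { apply Rle_trans with (e1 * (M0 + 1)). apply Rmult_le_compat_l; lra. unfold e1. right; field; lra. }
    assert (e1 * mass m0 <= eta / 3).
    { apply Rle_trans with (e1 * (M0 + 1)). apply Rmult_le_compat_l; unfold M0 in *; lra. unfold e1. right; field; lra. }
    unfold Dl.
    replace (m (tr (rowvec theta j u) f) - m0 (tr (rowvec theta j u) f)) with
      ((m (tr (rowvec theta j u) f) - m (tr (rowvec theta j ui) f)) + (m (tr (rowvec theta j ui) f) - m0 (tr (rowvec theta j ui) f))
       - (m0 (tr (rowvec theta j u) f) - m0 (tr (rowvec theta j ui) f))) by ring.
    set (b1 := m (tr (rowvec theta j u) f) - m (tr (rowvec theta j ui) f)) in *.
    set (b2 := m (tr (rowvec theta j ui) f) - m0 (tr (rowvec theta j ui) f)) in *.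
    set (b3 := m0 (tr (rowvec theta j u) f) - m0 (tr (rowvec theta j ui) f)) in *.
    pose proof (Rabs_triang (b1 + b2) (- b3)). pose proof (Rabs_triang b1 b2). rewrite Rabs_Ropp in *.
    unfold Rminus. lra. }
  assert (HD2 : forall u, Rabs (Dl u) <= K).
  { intros u. unfold Dl. eapply Rle_trans. apply Rabs_triang. rewrite Rabs_Ropp.
    assert (Rabs (m (tr (rowvec theta j u) f)) <= C * mass m) by (apply (m_bound d); auto; [apply Cper_tr; auto| intros; unfold tr; auto]).
    assert (Rabs (m0 (tr (rowvec theta j u) f)) <= C * mass m0) by (apply (m_bound d); auto; [apply Cper_tr; auto| intros; unfold tr; auto]).
    unfold K. fold M0 in H0. nra. }
  set (B := eta + K * exp (- (c / 2 * T))).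
  assert (I1 := A_spec d theta beta r Hbeta j m f Hr Hm Hf).
  assert (I2 := A_spec d theta beta r Hbeta j m0 f Hr Hm0 Hf).
  assert (I3 := ImpR_lin _ _ _ _ 1 (-1) I1 I2).
  assert (I4 := ImpR_scal _ _ B (ImpR_exp (c / 2) ltac:(lra))).
  assert (Hle := ImpR_abs_le _ _ _ _ I3 I4).
  replace (Aop theta beta r j m f - Aop theta beta r j m0 f) with (1 * Aop theta beta r j m f + -1 * Aop theta beta r j m0 f) by ring.
  eapply Rle_lt_trans. apply Hle.
  - intros u Hu. unfold phi. rewrite exp_btr. fold c.
    replace (1 * (exp (- (c * u)) * m (tr (rowvec theta j u) f)) + -1 * (exp (- (c * u)) * m0 (tr (rowvec theta j u) f)))
      with (exp (- (c * u)) * Dl u) by (unfold Dl; ring).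
    rewrite Rabs_mult, Rabs_right by (apply Rle_ge; left; apply exp_pos).
    assert (Eu : exp (- (c * u)) = exp (- (c / 2 * u)) * exp (- (c / 2 * u))) by (rewrite <- exp_plus; f_equal; field).
    assert (Hp1 : 0 < exp (- (c / 2 * u))) by apply exp_pos.
    unfold B. destruct (Rle_dec u T).
    + assert (exp (- (c * u)) <= exp (- (c / 2 * u))) by (apply exp_mono; nra).
      assert (0 <= K * exp (- (c / 2 * T))) by (apply Rmult_le_pos; auto; left; apply exp_pos).
      assert (exp (- (c * u)) * Rabs (Dl u) <= exp (- (c / 2 * u)) * eta).
      { apply Rmult_le_compat; try (left; apply exp_pos); try apply Rabs_pos; auto; apply HD1; lra. }
      nra.
    + assert (exp (- (c / 2 * u)) <= exp (- (c / 2 * T))) by (apply exp_mono; nra).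
      rewrite Eu.
      assert (exp (- (c / 2 * u)) * exp (- (c / 2 * u)) * Rabs (Dl u) <= exp (- (c / 2 * u)) * exp (- (c / 2 * T)) * K).
      { apply Rmult_le_compat; try apply Rabs_pos; auto.
        apply Rmult_le_pos; left; apply exp_pos. apply Rmult_le_compat_l; lra. }
      nra.
  - unfold B. rewrite Rmult_comm in PT. specialize (PT T (Rle_refl T)).
    apply Rlt_le_trans with ((eta + eps * c / 4) * / (c / 2)).
    apply Rmult_lt_compat_r. apply Rinv_0_lt_compat; lra. rewrite Rmult_comm in PT. lra.
    unfold eta. right. field. lra.
Qed.


Lemma WSC_Gen j l : NoDup (j :: l) -> rpos r (j :: l) -> WeakStarCont d (SubL d theta beta r (j :: l)) (Gen theta beta r j).
Proof.
  intros Hnd Hr X0 HX0 f Hf eps He.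
  assert (Hrj : 0 < r j) by (apply Hr; simpl; auto).
  assert (HJ0 := SubL_JSub d theta beta r Hbeta j l X0 Hnd Hr HX0).
  set (M0 := mass X0). assert (HM0 : 0 <= M0) by (apply (mass_pos d); apply HX0).
  set (c := beta * r j). assert (Hc : 0 < c) by (unfold c; apply Rmult_lt_0_compat; lra).
  set (eta1 := eps / (3 * (c * (2 * M0 + 1) + 1))).
  assert (He1 : 0 < eta1) by (unfold eta1; apply Rdiv_lt_0_compat; [lra|]; assert (0 <= c * (2 * M0 + 1)) by (apply Rmult_le_pos; lra); lra).
  destruct (avg_close d theta j f Hf eta1 He1) as [e0 [He0 Pe]].
  set (e := e0 / 2). assert (Hee : 0 < e < e0) by (unfold e; lra).
  set (g := avg theta j e f). assert (Hg : Cper d g) by (apply avg_Cper; auto; lra).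
  set (q := qe theta beta r j e f). assert (Hq : Cper d q) by (apply qe_Cper; auto; lra).
  exists ((fun _ : vec => 1) :: q :: nil), (Rmin 1 (eps / 3)). split. { apply Rmin_pos; lra. } split.
  { intros h [Hh|[Hh|[]]]; subst; auto. apply Cper_const. }
  intros X HX Hclose.
  assert (HJ := SubL_JSub d theta beta r Hbeta j l X Hnd Hr HX).
  assert (Hmass : mass X <= M0 + 1).
  { specialize (Hclose (fun _ => 1) (or_introl eq_refl)). apply Rabs_def2 in Hclose. pose proof (Rmin_l 1 (eps / 3)). unfold M0, mass in *. lra. }
  assert (HmX : 0 <= mass X) by (apply (mass_pos d); apply HX).
  assert (Hq2 : Rabs (X q - X0 q) < eps / 3).
  { eapply Rlt_le_trans. apply Hclose. simpl; auto. apply Rmin_r. }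
  assert (Bnd : forall Y, JSub d theta beta r j Y -> Rabs (Gen theta beta r j Y f - Gen theta beta r j Y g) <= eta1 * (c * mass Y)).
  { intros Y HY. assert (HGY := Gen_IsMeasure d theta beta r Hbeta j Hrj Y HY).
    rewrite <- (m_minus d _ HGY) by auto.
    replace (c * mass Y) with (mass (Gen theta beta r j Y)) by (unfold c; apply (Gen_mass d theta beta r Hbeta j Hrj Y HY)).
    apply (m_bound d); auto. apply Cper_minus; auto. intros x. rewrite <- Rabs_Ropp.
    replace (- (f x - g x)) with (g x - f x) by ring. apply Pe. lra. }
  assert (B1 := Bnd X HJ). assert (B2 := Bnd X0 HJ0).
  unfold g in B1, B2. rewrite (Gen_avg d theta beta r Hbeta j Hrj X e f HJ ltac:(lra) Hf) in B1.
  rewrite (Gen_avg d theta beta r Hbeta j Hrj X0 e f HJ0 ltac:(lra) Hf) in B2. fold q in B1, B2.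
  assert (eta1 * (c * mass X) + eta1 * (c * M0) <= eps / 3).
  { apply Rle_trans with (eta1 * (c * (2 * M0 + 1))).
    assert (c * mass X <= c * (M0 + 1)) by (apply Rmult_le_compat_l; lra). nra.
    unfold eta1. apply Rle_trans with (eps / (3 * (c * (2 * M0 + 1) + 1)) * (c * (2 * M0 + 1) + 1)).
    apply Rmult_le_compat_l. left; apply Rdiv_lt_0_compat; [lra|]. assert (0 <= c * (2 * M0 + 1)) by (apply Rmult_le_pos; lra); lra. lra.
    right; field. assert (0 <= c * (2 * M0 + 1)) by (apply Rmult_le_pos; lra); lra. }
  set (a1 := Gen theta beta r j X f - X q) in *. set (a2 := Gen theta beta r j X0 f - X0 q) in *.
  replace (Gen theta beta r j X f - Gen theta beta r j X0 f) with (a1 + (X q - X0 q) - a2) by (unfold a1, a2; ring).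
  pose proof (Rabs_triang (a1 + (X q - X0 q)) (- a2)). pose proof (Rabs_triang a1 (X q - X0 q)).
  rewrite Rabs_Ropp in *. fold M0 in B2. unfold Rminus in *. lra.
Qed.

Lemma WSC_Acomp l : rpos r l -> WeakStarCont d (IsMeasure d) (AcompL theta beta r l).
Proof.
  induction l as [|j l IH]; intros Hr.
  - apply WSC_id.
  - destruct (rpos_cons r j l Hr) as [Hrj Hrl].
    apply (WSC_comp d (IsMeasure d) (IsMeasure d) (Aop theta beta r j) (AcompL theta beta r l)).
    apply WSC_A; auto. intros; apply A_IsMeasure; auto. apply IH; auto.
Qed.

Lemma WSC_Gcomp l : NoDup l -> rpos r l -> WeakStarCont d (SubL d theta beta r l) (GcompL theta beta r l).
Proof.
  induction l as [|j l IH]; intros Hnd Hr.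
  - apply WSC_id.
  - inversion Hnd as [|? ? Hnj Hnd']. subst. destruct (rpos_cons r j l Hr) as [Hrj Hrl].
    apply (WSC_comp d _ (SubL d theta beta r l) (Gen theta beta r j) (GcompL theta beta r l)).
    apply WSC_Gen; auto. intros; apply Gen_SubL; auto. apply IH; auto.
Qed.

End WSC2.

Lemma Sub_equiv d k theta beta r nu :
  Subinvariant d k theta beta r nu <-> SubL d theta beta r (seq 0 k) nu.
Proof.
  unfold Subinvariant, SubL. split; intros [H1 H2]; split; auto; intros s Hs.
  - apply H2. intros j Hj. apply Hs. apply in_seq. lia.
  - apply H2. intros j Hj. apply in_seq in Hj. apply Hs. lia.
Qed.

Lemma integrand_eq k theta beta r (mu : meas) f :
  (fun w => exp (- (beta * sumR k (fun j => w j * r j))) * mu (fun x => f (vadd x (thetaT k theta w)))) =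
  (fun w => exp (- (beta * lsum (seq 0 k) (fun j => w j * r j))) * mu (fun x => f (vadd x (lvec theta (seq 0 k) w)))).
Proof.
  apply functional_extensionality; intro w. rewrite sumR_lsum. f_equal. f_equal.
  apply functional_extensionality; intro x. f_equal. f_equal.
  apply functional_extensionality; intro i. unfold thetaT, lvec. apply sumR_lsum.
Qed.

Lemma limfun_eq k theta beta r (nu : meas) f :
  (fun s => / prodR k s * Pop k theta beta r s nu f) =
  (fun s => / lprod (seq 0 k) s * PopL theta beta r (seq 0 k) s nu f).
Proof. apply functional_extensionality; intro s. rewrite prodR_lprod. reflexivity. Qed.

Theorem mainTheorem12 (d k : nat) (theta : nat -> nat -> R) (beta : R) (r : nat -> R)
  (Htheta : forall j i, (j < k)%nat -> (i < d)%nat -> 0 <= theta j i)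
  (Hbeta : 0 < beta)
  (Hr : forall j, (j < k)%nat -> 0 < r j) :
  (* (a) *)
  (forall mu, IsMeasure d mu -> exists nu,
     IsMeasure d nu /\
     (forall f, Cper d f ->
        IterInt (seq 0 k)
          (fun w => exp (- (beta * sumR k (fun j => w j * r j))) *
                    mu (fun x => f (vadd x (thetaT k theta w))))
          (nu f)) /\
     mass nu = mass mu * prodR k (fun j => / (beta * r j)) /\
     Subinvariant d k theta beta r nu) /\
  (* (b) *)
  (forall nu, Subinvariant d k theta beta r nu -> exists mu,
     IsMeasure d mu /\
     (forall f, Cper d f ->
        IterLim (seq 0 k)
          (fun s => / prodR k s * Pop k theta beta r s nu f) (mu f)) /\
     mass mu = mass nu * prodR k (fun j => beta * r j)) /\
  (* (c) *)
  (exists Phi Psi : meas -> meas,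
     (forall mu, IsMeasure d mu ->
        forall f, Cper d f ->
          IterInt (seq 0 k)
            (fun w => exp (- (beta * sumR k (fun j => w j * r j))) *
                      mu (fun x => f (vadd x (thetaT k theta w))))
            (Phi mu f)) /\
     (forall nu, Subinvariant d k theta beta r nu ->
        forall f, Cper d f ->
          IterLim (seq 0 k)
            (fun s => / prodR k s * Pop k theta beta r s nu f) (Psi nu f)) /\
     (forall mu, IsMeasure d mu -> Subinvariant d k theta beta r (Phi mu)) /\
     (forall nu, Subinvariant d k theta beta r nu -> IsMeasure d (Psi nu)) /\
     (forall mu, IsMeasure d mu -> MeasEq d (Psi (Phi mu)) mu) /\
     (forall nu, Subinvariant d k theta beta r nu -> MeasEq d (Phi (Psi nu)) nu) /\
     (forall mu1 mu2 t, IsMeasure d mu1 -> IsMeasure d mu2 -> 0 <= t <= 1 ->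
        MeasEq d (Phi (fun f => t * mu1 f + (1 - t) * mu2 f))
                 (fun f => t * Phi mu1 f + (1 - t) * Phi mu2 f)) /\
     WeakStarCont d (IsMeasure d) Phi /\
     WeakStarCont d (Subinvariant d k theta beta r) Psi).
Proof.
  assert (Hnd : NoDup (seq 0 k)) by apply seq_NoDup.
  assert (Hrl : rpos r (seq 0 k)) by (intros i Hi; apply in_seq in Hi; apply Hr; lia).
  set (Phi := AcompL theta beta r (seq 0 k)). set (Psi := GcompL theta beta r (seq 0 k)).
  assert (HA : forall mu, IsMeasure d mu -> forall f, Cper d f ->
     IterInt (seq 0 k)
       (fun w => exp (- (beta * sumR k (fun j => w j * r j))) * mu (fun x => f (vadd x (thetaT k theta w))))
       (Phi mu f)).
  { intros mu Hmu f Hf. rewrite integrand_eq. apply (IterInt_Acomp d theta beta r Hbeta); auto. }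
  assert (HB : forall nu, Subinvariant d k theta beta r nu ->
     IsMeasure d (Psi nu) /\ mass (Psi nu) = mass nu * prodR k (fun j => beta * r j) /\
     forall f, Cper d f -> IterLim (seq 0 k) (fun s => / prodR k s * Pop k theta beta r s nu f) (Psi nu f)).
  { intros nu Hnu. apply Sub_equiv in Hnu.
    destruct (Gcomp_main d theta beta r Hbeta (seq 0 k) Hnd Hrl nu Hnu) as [H1 [H2 H3]].
    split; auto. split. rewrite prodR_lprod; auto. intros f Hf. rewrite limfun_eq. auto. }
  assert (HS : forall mu, IsMeasure d mu -> Subinvariant d k theta beta r (Phi mu)).
  { intros mu Hmu. apply Sub_equiv. apply (SubL_Acomp d theta beta r Hbeta); auto. }
  split; [|split].
  - intros mu Hmu. exists (Phi mu). split. apply (AcompL_IsMeasure d theta beta r Hbeta); auto.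
    split. apply HA; auto. split. rewrite prodR_lprod. apply (AcompL_mass d theta beta r Hbeta); auto.
    apply HS; auto.
  - intros nu Hnu. exists (Psi nu). destruct (HB nu Hnu) as [H1 [H2 H3]]. split; auto.
  - exists Phi, Psi. split; [auto|]. split; [intros; apply HB; auto|]. split; [auto|].
    split; [intros; apply HB; auto|]. split.
    { intros mu Hmu. apply (Gcomp_Acomp d theta beta r Hbeta); auto. }
    split.
    { intros nu Hnu. apply Sub_equiv in Hnu. apply (Acomp_Gcomp d theta beta r Hbeta); auto. }
    split.
    { intros mu1 mu2 t H1 H2 Ht. apply (AcompL_lin d theta beta r Hbeta); auto; lra. }
    split.
    + apply (WSC_Acomp d theta beta r Hbeta); auto.
    + apply (WSC_class d (SubL d theta beta r (seq 0 k))). intros m Hm; apply Sub_equiv; auto.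
      apply (WSC_Gcomp d theta beta r Hbeta); auto.
Qed.
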